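(* Let $\gamma_a,\gamma_s>0$ and consider \[ \begin{cases} \gamma_a T_a'=-\lambda(T_a-T_s)+\varepsilon_a\sigma_B|T_s|^3T_s-2\varepsilon_a\sigma_B|T_a|^3T_a+q\beta_a(T_a),\\ \gamma_s T_s'=-\lambda(T_s-T_a)-\sigma_B|T_s|^3T_s+\varepsilon_a\sigma_B|T_a|^3T_a+q\beta_s(T_s),\\ T_a(0)=T_a^{(0)},\quad T_s(0)=T_s^{(0)}. \end{cases} \] (a) Assume $\lambda=0$, $q>0$, $\sigma_B>0$, $\beta_a=0$, $\beta_s$ is the piecewise linear coalbedo described in the context, $\varepsilon_a>2$, and $T_a^{(0)}\ge0$, $T_s^{(0)}\ge0$. Then the problem admits a unique maximal solution, and this solution blows up in finite time. (b) Assume $\lambda>0$, $q>0$, $\sigma_B>0$, $\beta_a\ge0$ and $\beta_s>0$ are globally Lipschitz continuous on $\mathbb R$, and $\varepsilon_a>2$. Then there exist initial conditions $T_a^{(0)}\ge0$, $T_s^{(0)}\ge0$ for which the solution of the problem blows up in finite time.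
   Context: The piecewise linear coalbedo is $\beta_s(T)=\beta_{s,-}$ for $T\le T_{s,-}$, $\beta_s(T)=\beta_{s,-}+(\beta_{s,+}-\beta_{s,-})\frac{T-T_{s,-}}{T_{s,+}-T_{s,-}}$ for $T\in[T_{s,-},T_{s,+}]$, and $\beta_s(T)=\beta_{s,+}$ for $T\ge T_{s,+}$, where $T_{s,+}>T_{s,-}>0$ and $\beta_{s,+}>\beta_{s,-}>0$. *)

(* Defs.v *)
From Stdlib Require Export Reals.
From Coquelicot Require Export Coquelicot.
Open Scope R_scope.

Definition coalbedo (Tm Tp bm bp : R) (T : R) : R :=
  if Rle_dec T Tm then bm
  else if Rle_dec Tp T then bp
  else bm + (bp - bm) * (T - Tm) / (Tp - Tm).

Definition rhs_a (lam eps sB q : R) (ba : R -> R) (Ta Ts : R) : R :=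
  - lam * (Ta - Ts) + eps * sB * (Rabs Ts ^ 3 * Ts)
  - 2 * eps * sB * (Rabs Ta ^ 3 * Ta) + q * ba Ta.

Definition rhs_s (lam eps sB q : R) (bs : R -> R) (Ta Ts : R) : R :=
  - lam * (Ts - Ta) - sB * (Rabs Ts ^ 3 * Ts)
  + eps * sB * (Rabs Ta ^ 3 * Ta) + q * bs Ts.

Definition is_solution (ga gs lam eps sB q : R) (ba bs : R -> R)
    (Ta0 Ts0 : R) (T : R) (Ta Ts : R -> R) : Prop :=
  Ta 0 = Ta0 /\ Ts 0 = Ts0 /\
  filterlim Ta (at_right 0) (locally Ta0) /\
  filterlim Ts (at_right 0) (locally Ts0) /\
  forall t, 0 < t < T ->
    exists dTa dTs, is_derive Ta t dTa /\ is_derive Ts t dTs /\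
      ga * dTa = rhs_a lam eps sB q ba (Ta t) (Ts t) /\
      gs * dTs = rhs_s lam eps sB q bs (Ta t) (Ts t).

Definition unique_maximal_solution_blows_up (ga gs lam eps sB q : R)
    (ba bs : R -> R) (Ta0 Ts0 : R) : Prop :=
  exists (Tmax : R) (Ta Ts : R -> R),
    0 < Tmax /\
    is_solution ga gs lam eps sB q ba bs Ta0 Ts0 Tmax Ta Ts /\
    (forall (T : R) (Ua Us : R -> R), 0 < T ->
       is_solution ga gs lam eps sB q ba bs Ta0 Ts0 T Ua Us ->
       T <= Tmax /\ (forall t, 0 <= t < T -> Ua t = Ta t /\ Us t = Ts t)) /\
    filterlim (fun t => Rabs (Ta t) + Rabs (Ts t)) (at_left Tmax)
      (Rbar_locally p_infty).

Definition globally_lipschitz (f : R -> R) : Prop :=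
  exists L, forall x y, Rabs (f x - f y) <= L * Rabs (x - y).

(* Main.v *)
Require Import Defs.
From Stdlib Require Import Lra Lia Psatz Classical ZArith.

Lemma locally_of_delta (t : R) (P : R -> Prop) :
  (exists d, 0 < d /\ forall y, Rabs (y - t) < d -> P y) -> locally t P.
Proof. intros [d [Hd H]]. exists (mkposreal d Hd). intros y Hy. apply H. exact Hy. Qed.

Lemma at_right_of_delta (P : R -> Prop) :
  (exists d, 0 < d /\ forall s, 0 < s < d -> P s) -> at_right 0 P.
Proof.
  intros [d [Hd H]]. exists (mkposreal d Hd). intros y Hy Hp. apply H.
  change (Rabs (y - 0) < d) in Hy. split; [exact Hp|]. rewrite Rminus_0_r in Hy.
  apply Rabs_def2 in Hy. lra.
Qed.

Lemma right_cont_eps (f : R -> R) l : filterlim f (at_right 0) (locally l) ->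
  forall eps, 0 < eps -> exists d, 0 < d /\ forall s, 0 < s < d -> Rabs (f s - l) < eps.
Proof.
  intros H eps He.
  destruct (proj1 (filterlim_locally f l) H (mkposreal eps He)) as [d Hd].
  exists d. split. apply cond_pos. intros s [H1 H2]. apply (Hd s).
  change (Rabs (s - 0) < d). rewrite Rminus_0_r. rewrite Rabs_right; lra. exact H1.
Qed.

Lemma cont_eps (f : R -> R) t : continuous f t ->
  forall eps, 0 < eps -> exists d, 0 < d /\ forall s, Rabs (s - t) < d -> Rabs (f s - f t) < eps.
Proof.
  intros H eps He.
  destruct (proj1 (filterlim_locally f (f t)) H (mkposreal eps He)) as [d Hd].
  exists d. split. apply cond_pos. intros s Hs. apply (Hd s). exact Hs.
Qed.

Lemma right_cont_of_bound (f : R -> R) K : 0 <= K ->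
  (forall s, 0 < s -> Rabs (f s - f 0) <= K * s) ->
  filterlim f (at_right 0) (locally (f 0)).
Proof.
  intros HK H. apply filterlim_locally. intros eps.
  apply at_right_of_delta. exists (eps / (K + 1)). split.
  apply Rdiv_lt_0_compat; [apply cond_pos| lra].
  intros s [H1 H2]. change (Rabs (f s - f 0) < eps).
  eapply Rle_lt_trans. apply H. exact H1.
  assert (eps > 0) by apply cond_pos.
  apply Rle_lt_trans with (K * (eps / (K+1))). apply Rmult_le_compat_l; lra.
  unfold Rdiv. rewrite <- Rmult_assoc. apply Rmult_lt_reg_r with (K+1). lra.
  rewrite Rmult_assoc, Rinv_l by lra. nra.
Qed.

Lemma lip_cont (f : R -> R) t K : (forall s, Rabs (f s - f t) <= K * Rabs (s - t)) -> continuous f t.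
Proof.
  intros H. apply filterlim_locally. intros eps.
  apply locally_of_delta. assert (eps > 0) by apply cond_pos.
  assert (HK : 0 <= K). { specialize (H (t+1)). replace (t+1-t) with 1 in H by ring.
    rewrite Rabs_R1 in H. pose proof (Rabs_pos (f (t+1) - f t)). lra. }
  exists (eps / (K + 1)). split. apply Rdiv_lt_0_compat; lra.
  intros s Hs. change (Rabs (f s - f t) < eps).
  eapply Rle_lt_trans. apply H.
  apply Rle_lt_trans with (K * (eps / (K+1))). apply Rmult_le_compat_l; lra.
  unfold Rdiv. rewrite <- Rmult_assoc. apply Rmult_lt_reg_r with (K+1). lra.
  rewrite Rmult_assoc, Rinv_l by lra. nra.
Qed.

Lemma deriv_pos_left f t d : is_derive f t d -> 0 < d ->
  exists e, 0 < e /\ forall r, t - e < r < t -> f r < f t.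
Proof.
  intros H Hd. apply is_derive_Reals in H.
  destruct (H d Hd) as [del Hdel]. exists del. split. apply cond_pos.
  intros r Hr. assert (Hh : r - t <> 0) by lra.
  assert (Ha : Rabs (r - t) < del). { rewrite Rabs_left; lra. }
  specialize (Hdel (r - t) Hh Ha). replace (t + (r - t)) with r in Hdel by ring.
  apply Rabs_def2 in Hdel. destruct Hdel as [_ Hq].
  set (q := (f r - f t) / (r - t)) in *.
  assert (Hfq : f r - f t = q * (r - t)). { unfold q. field. exact Hh. }
  nra.
Qed.

Lemma deriv_cont (f : R -> R) t d : is_derive f t d -> continuous f t.
Proof. intros H. apply (ex_derive_continuous (V:=R_NormedModule)). exists d. exact H. Qed.

Lemma mvt f df a b : a <= b -> (forall s, a <= s <= b -> is_derive f s (df s)) ->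
  exists c, a <= c <= b /\ f b - f a = df c * (b - a).
Proof.
  intros Hab H. destruct (MVT_gen f a b df) as [c [Hc He]].
  - intros x Hx. rewrite Rmin_left in Hx by lra. rewrite Rmax_right in Hx by lra. apply H; lra.
  - intros x Hx. rewrite Rmin_left in Hx by lra. rewrite Rmax_right in Hx by lra.
    apply continuity_pt_filterlim. eapply deriv_cont. apply H; lra.
  - exists c. rewrite Rmin_left in Hc by lra. rewrite Rmax_right in Hc by lra. auto.
Qed.

Lemma cont_pos_nbhd (f : R -> R) t : continuous f t -> 0 < f t ->
  exists d, 0 < d /\ forall s, Rabs (s - t) < d -> 0 < f s.
Proof.
  intros H Hp. destruct (cont_eps f t H (f t) Hp) as [d [Hd Hd']].
  exists d. split; auto. intros s Hs. specialize (Hd' s Hs). apply Rabs_def2 in Hd'. lra.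
Qed.

Ltac realify t := let a := fresh "r" in let E := fresh "E" in
  destruct (ex_intro (fun a : R => a = t) t eq_refl) as [a E]; rewrite <- E in *.

Definition LipF (f : R -> R) (K : R) := forall s t, Rabs (f s - f t) <= K * Rabs (s - t).

Lemma LipF_cont f K t : LipF f K -> continuous f t.
Proof. intros H. apply (lip_cont f t K). intros s. apply H. Qed.

Lemma LipF_RInt f K a b : LipF f K -> ex_RInt f a b.
Proof. intros H. apply (ex_RInt_continuous (V:=R_CompleteNormedModule)). intros z _. eapply LipF_cont. exact H. Qed.

Lemma LipF_minus f g K1 K2 : LipF f K1 -> LipF g K2 -> LipF (fun s => f s - g s) (K1 + K2).
Proof.
  intros H1 H2 s t. specialize (H1 s t). specialize (H2 s t).
  replace (f s - g s - (f t - g t)) with ((f s - f t) - (g s - g t)) by ring.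
  eapply Rle_trans. apply Rabs_triang. rewrite Rabs_Ropp. lra.
Qed.

Lemma LipF_abs f K : LipF f K -> LipF (fun s => Rabs (f s)) K.
Proof.
  intros H s t. eapply Rle_trans. apply Rabs_triang_inv2. apply H.
Qed.

Definition glip (G : R -> R -> R) (L : R) :=
  forall x y x' y', Rabs (G x y - G x' y') <= L * (Rabs (x - x') + Rabs (y - y')).

Lemma LipF_comp G L f1 f2 K : 0 <= L -> glip G L -> LipF f1 K -> LipF f2 K ->
  LipF (fun s => G (f1 s) (f2 s)) (L * (K + K)).
Proof.
  intros HL HG H1 H2 s t. eapply Rle_trans. apply HG.
  specialize (H1 s t). specialize (H2 s t).
  rewrite Rmult_assoc. apply Rmult_le_compat_l; lra.
Qed.

Lemma RInt_diff_bound g M s t : (forall a b, ex_RInt g a b) ->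
  (forall u, Rabs (g u) <= M) ->
  Rabs (RInt g 0 t - RInt g 0 s) <= M * Rabs (t - s).
Proof.
  intros Hex HM.
  assert (Hc : RInt g 0 t = RInt g 0 s + RInt g s t :> R).
  { symmetry. apply (RInt_Chasles g 0 s t); auto. }
  rewrite Hc. realify (RInt g 0 s). realify (RInt g s t). replace (r + r0 - r) with r0 by ring. subst r0.
  destruct (Rle_dec s t) as [Hst|Hst].
  - rewrite (Rabs_right (t - s)) by lra. rewrite Rmult_comm.
    apply abs_RInt_le_const; auto.
  - rewrite <- (opp_RInt_swap g t s) by auto. change (opp (RInt g t s)) with (- RInt g t s).
    rewrite Rabs_Ropp. rewrite (Rabs_left (t - s)) by lra.
    replace (- (t - s)) with (s - t) by ring. rewrite Rmult_comm.
    apply abs_RInt_le_const; auto. lra.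
Qed.

Fixpoint pic (G1 G2 : R -> R -> R) (x0 y0 : R) (k : nat) : (R -> R) * (R -> R) :=
  match k with
  | O => (fun _ => x0, fun _ => y0)
  | S k' => let p := pic G1 G2 x0 y0 k' in
     (fun t => x0 + RInt (fun s => G1 (fst p s) (snd p s)) 0 t,
      fun t => y0 + RInt (fun s => G2 (fst p s) (snd p s)) 0 t)
  end.

Definition px G1 G2 x0 y0 k := fst (pic G1 G2 x0 y0 k).
Definition py G1 G2 x0 y0 k := snd (pic G1 G2 x0 y0 k).

Lemma px_S G1 G2 x0 y0 k t : px G1 G2 x0 y0 (S k) t =
  x0 + RInt (fun s => G1 (px G1 G2 x0 y0 k s) (py G1 G2 x0 y0 k s)) 0 t.
Proof. reflexivity. Qed.
Lemma py_S G1 G2 x0 y0 k t : py G1 G2 x0 y0 (S k) t =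
  y0 + RInt (fun s => G2 (px G1 G2 x0 y0 k s) (py G1 G2 x0 y0 k s)) 0 t.
Proof. reflexivity. Qed.

Definition hyps (G1 G2 : R -> R -> R) (L M : R) :=
  0 < L /\ 0 < M /\ glip G1 L /\ glip G2 L /\
  (forall x y, Rabs (G1 x y) <= M) /\ (forall x y, Rabs (G2 x y) <= M).

Lemma pic_lip G1 G2 L M x0 y0 : hyps G1 G2 L M -> forall k,
  LipF (px G1 G2 x0 y0 k) M /\ LipF (py G1 G2 x0 y0 k) M.
Proof.
  intros (HL & HM & H1 & H2 & B1 & B2). induction k as [|k [IHx IHy]].
  - split; intros s t; unfold px, py; simpl; rewrite Rminus_eq_0, Rabs_R0;
      apply Rmult_le_pos; [lra | apply Rabs_pos | lra | apply Rabs_pos].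
  - split; intros s t; rewrite ?px_S, ?py_S.
    + replace (x0 + _ - _) with (RInt (fun s0 => G1 (px G1 G2 x0 y0 k s0) (py G1 G2 x0 y0 k s0)) 0 s -
        RInt (fun s0 => G1 (px G1 G2 x0 y0 k s0) (py G1 G2 x0 y0 k s0)) 0 t) by ring.
      apply RInt_diff_bound; auto. intros a b. eapply LipF_RInt. apply LipF_comp; eauto; lra.
    + replace (y0 + _ - _) with (RInt (fun s0 => G2 (px G1 G2 x0 y0 k s0) (py G1 G2 x0 y0 k s0)) 0 s -
        RInt (fun s0 => G2 (px G1 G2 x0 y0 k s0) (py G1 G2 x0 y0 k s0)) 0 t) by ring.
      apply RInt_diff_bound; auto. intros a b. eapply LipF_RInt. apply LipF_comp; eauto; lra.
Qed.

Lemma int_exp L C t : 0 < L ->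
  RInt (fun s => L * C * exp (4 * L * s)) 0 t = L * C * (exp (4 * L * t) - 1) / (4 * L).
Proof.
  intros HL. apply is_RInt_unique.
  replace (L * C * (exp (4 * L * t) - 1) / (4 * L)) with
    (minus ((fun s => L * C * exp (4 * L * s) / (4 * L)) t) ((fun s => L * C * exp (4 * L * s) / (4 * L)) 0)).
  2:{ change (minus ?a ?b) with (a - b). cbv beta. rewrite Rmult_0_r, exp_0.
    assert (H: forall e : R, L*C*e/(4*L) - L*C*1/(4*L) = L*C*(e-1)/(4*L)) by (intro; field; lra). apply H. }
  apply (is_RInt_derive (V:=R_CompleteNormedModule) (fun s => L * C * exp (4 * L * s) / (4 * L))).
  - intros x _. auto_derive. auto. field. lra.
  - intros x _. apply continuity_pt_filterlim. apply derivable_continuous_pt.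
    apply derivable_pt_mult. apply derivable_pt_const.
    apply derivable_pt_comp. apply derivable_pt_scal. apply derivable_pt_id. apply derivable_pt_exp.
Qed.

Lemma ex_RInt_exp a b u v : ex_RInt (fun s => a * exp (b * s)) u v.
Proof.
  apply (ex_RInt_continuous (V:=R_CompleteNormedModule)). intros z _.
  apply continuity_pt_filterlim. apply derivable_continuous_pt.
  apply derivable_pt_mult. apply derivable_pt_const.
  apply derivable_pt_comp. apply derivable_pt_scal. apply derivable_pt_id. apply derivable_pt_exp.
Qed.

Lemma step_bound G L C g0x g0y g1x g1y K t : 0 <= t -> 0 < L -> 0 <= C -> glip G L ->
  LipF g0x K -> LipF g0y K -> LipF g1x K -> LipF g1y K ->
  (forall s, 0 <= s -> Rabs (g1x s - g0x s) + Rabs (g1y s - g0y s) <= C * exp (4 * L * s)) ->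
  Rabs (RInt (fun s => G (g1x s) (g1y s)) 0 t - RInt (fun s => G (g0x s) (g0y s)) 0 t)
    <= L * C * (exp (4 * L * t) - 1) / (4 * L).
Proof.
  intros Ht HL HC HG H0x H0y H1x H1y HB.
  assert (Lf1 : LipF (fun s => G (g1x s) (g1y s)) (L * (K + K))) by (apply LipF_comp; auto; lra).
  assert (Lf0 : LipF (fun s => G (g0x s) (g0y s)) (L * (K + K))) by (apply LipF_comp; auto; lra).
  assert (Ld := LipF_minus _ _ _ _ Lf1 Lf0).
  assert (E : RInt (fun s => G (g1x s) (g1y s) - G (g0x s) (g0y s)) 0 t =
     RInt (fun s => G (g1x s) (g1y s)) 0 t - RInt (fun s => G (g0x s) (g0y s)) 0 t :> R).
  { apply (RInt_minus (V:=R_CompleteNormedModule)); eapply LipF_RInt; eauto. }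
  rewrite <- E. eapply Rle_trans. apply abs_RInt_le. exact Ht. eapply LipF_RInt; exact Ld.
  rewrite <- int_exp by exact HL. apply RInt_le. exact Ht.
  eapply LipF_RInt. apply LipF_abs. exact Ld.
  apply ex_RInt_exp.
  intros s Hs. rewrite Rmult_assoc. eapply Rle_trans. apply HG.
  apply Rmult_le_compat_l. lra. apply HB. lra.
Qed.

Lemma pic_diff G1 G2 L M x0 y0 : hyps G1 G2 L M -> forall k t, 0 <= t ->
  Rabs (px G1 G2 x0 y0 (S k) t - px G1 G2 x0 y0 k t) +
  Rabs (py G1 G2 x0 y0 (S k) t - py G1 G2 x0 y0 k t)
    <= (M / (2 * L)) * (/2) ^ k * exp (4 * L * t).
Proof.
  intros HH. pose proof (pic_lip G1 G2 L M x0 y0 HH) as Hlip.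
  destruct HH as (HL & HM & H1 & H2 & B1 & B2).
  induction k as [|k IH]; intros t Ht.
  - rewrite px_S, py_S. unfold px, py. simpl.
    rewrite !RInt_const. change (scal ?a ?b) with (a * b).
    replace (x0 + (t - 0) * G1 x0 y0 - x0) with (t * G1 x0 y0) by ring.
    replace (y0 + (t - 0) * G2 x0 y0 - y0) with (t * G2 x0 y0) by ring.
    rewrite !Rabs_mult, (Rabs_right t) by lra.
    pose proof (B1 x0 y0). pose proof (B2 x0 y0).
    pose proof (exp_ineq1_le (4 * L * t)).
    apply Rle_trans with (2 * M * t). nra.
    apply Rle_trans with (M / (2 * L) * (4 * L * t)).
    right. field. lra. simpl pow. rewrite Rmult_1_r.
    apply Rmult_le_compat_l. apply Rlt_le, Rdiv_lt_0_compat; lra. lra.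
  - rewrite (px_S _ _ _ _ (S k)), (py_S _ _ _ _ (S k)), (px_S _ _ _ _ k), (py_S _ _ _ _ k).
    set (C := M / (2 * L) * (/ 2) ^ k).
    assert (HC : 0 <= C). { unfold C. apply Rmult_le_pos. apply Rlt_le, Rdiv_lt_0_compat; lra.
      apply pow_le. lra. }
    destruct (Hlip k) as [Lxk Lyk]. destruct (Hlip (S k)) as [Lxk1 Lyk1].
    assert (IH' : forall s, 0 <= s -> Rabs (px G1 G2 x0 y0 (S k) s - px G1 G2 x0 y0 k s) +
      Rabs (py G1 G2 x0 y0 (S k) s - py G1 G2 x0 y0 k s) <= C * exp (4 * L * s)) by (intros; apply IH; auto).
    pose proof (step_bound G1 L C _ _ _ _ M t Ht HL HC H1 Lxk Lyk Lxk1 Lyk1 IH') as S1.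
    pose proof (step_bound G2 L C _ _ _ _ M t Ht HL HC H2 Lxk Lyk Lxk1 Lyk1 IH') as S2.
    match goal with |- Rabs (?a - ?b) + Rabs (?c - ?d) <= _ =>
      replace (a - b) with (RInt (fun s => G1 (px G1 G2 x0 y0 (S k) s) (py G1 G2 x0 y0 (S k) s)) 0 t -
         RInt (fun s => G1 (px G1 G2 x0 y0 k s) (py G1 G2 x0 y0 k s)) 0 t) by ring;
      replace (c - d) with (RInt (fun s => G2 (px G1 G2 x0 y0 (S k) s) (py G1 G2 x0 y0 (S k) s)) 0 t -
         RInt (fun s => G2 (px G1 G2 x0 y0 k s) (py G1 G2 x0 y0 k s)) 0 t) by ring end.
    eapply Rle_trans. apply Rplus_le_compat; [exact S1 | exact S2].
    assert (E2 : M / (2 * L) * (/ 2) ^ S k * exp (4 * L * t) = C * exp (4*L*t) / 2)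
      by (unfold C; simpl; field; lra).
    rewrite E2.
    assert (E3: L * C * (exp (4 * L * t) - 1) / (4 * L) = C * (exp (4*L*t) - 1)/4) by (field; lra).
    rewrite E3. set (e := exp (4 * L * t)). nra.
Qed.

Lemma geom_small c eps : 0 <= c -> 0 < eps -> exists N, forall n, (n >= N)%nat -> c * (/2)^n < eps.
Proof.
  intros Hc He. destruct (pow_lt_1_zero (/2) ltac:(rewrite Rabs_right; lra) (eps / (c + 1)))
    as [N HN]. apply Rdiv_lt_0_compat; lra.
  exists N. intros n Hn. specialize (HN n Hn). rewrite Rabs_right in HN.
  2:{ apply Rle_ge, pow_le; lra. }
  apply Rle_lt_trans with ((c + 1) * (/2)^n). apply Rmult_le_compat_r. apply pow_le; lra. lra.
  apply Rmult_lt_reg_l with (/ (c+1)). apply Rinv_0_lt_compat; lra.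
  rewrite <- Rmult_assoc, Rinv_l by lra. lra.
Qed.

Lemma zero_of_geom c K : (forall k, Rabs c <= K * (/2)^k) -> c = 0.
Proof.
  intros H. destruct (Req_dec c 0) as [|Hc]; auto. exfalso.
  assert (HK : 0 <= K). { specialize (H O). simpl in H. pose proof (Rabs_pos c). lra. }
  destruct (geom_small K (Rabs c) HK) as [N HN]. apply Rabs_pos_lt; auto.
  specialize (HN N (le_n N)). specialize (H N). lra.
Qed.

Lemma pic_tail G1 G2 L M x0 y0 : hyps G1 G2 L M -> forall k m t, 0 <= t ->
  Rabs (px G1 G2 x0 y0 (m + k) t - px G1 G2 x0 y0 k t) +
  Rabs (py G1 G2 x0 y0 (m + k) t - py G1 G2 x0 y0 k t)
    <= 2 * (M / (2 * L)) * (/2) ^ k * exp (4 * L * t) * (1 - (/2)^m).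
Proof.
  intros HH k m t Ht. pose proof (pic_diff G1 G2 L M x0 y0 HH) as HD.
  destruct HH as (HL & HM & _).
  induction m as [|m IH].
  - simpl. rewrite !Rminus_eq_0, Rabs_R0. lra.
  - change (S m + k)%nat with (S (m + k)). specialize (HD (m + k)%nat t Ht).
    rewrite pow_add in HD.
    set (a := px G1 G2 x0 y0 (S (m + k)) t) in *. set (b := px G1 G2 x0 y0 (m + k) t) in *.
    set (c := px G1 G2 x0 y0 k t) in *.
    set (a' := py G1 G2 x0 y0 (S (m + k)) t) in *. set (b' := py G1 G2 x0 y0 (m + k) t) in *.
    set (c' := py G1 G2 x0 y0 k t) in *.
    pose proof (Rabs_triang (a - b) (b - c)). pose proof (Rabs_triang (a' - b') (b' - c')).
    replace (a - b + (b - c)) with (a - c) in * by ring.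
    replace (a' - b' + (b' - c')) with (a' - c') in * by ring.
    set (A := M / (2 * L)) in *. set (e := exp (4 * L * t)) in *. simpl pow.
    assert (0 <= A * (/2)^k * e).
    { apply Rmult_le_pos. apply Rmult_le_pos. apply Rlt_le, Rdiv_lt_0_compat; lra. apply pow_le; lra.
      apply Rlt_le, exp_pos. }
    set (P := (/2)^m) in *. set (Q := (/2)^k) in *.
    assert (E1 : A * (P * Q) * e = P * (A * Q * e)) by ring. rewrite E1 in HD.
    assert (E2 : 2 * A * Q * e * (1 - / 2 * P) = 2 * A * Q * e * (1 - P) + P * (A * Q * e)) by field.
    rewrite E2. lra.
Qed.

Definition solX G1 G2 x0 y0 t : R := real (Lim_seq (fun k => px G1 G2 x0 y0 k (Rmax 0 t))).
Definition solY G1 G2 x0 y0 t : R := real (Lim_seq (fun k => py G1 G2 x0 y0 k (Rmax 0 t))).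

Lemma pic_cauchy G1 G2 L M x0 y0 t : hyps G1 G2 L M -> 0 <= t ->
  ex_lim_seq_cauchy (fun k => px G1 G2 x0 y0 k t) /\ ex_lim_seq_cauchy (fun k => py G1 G2 x0 y0 k t).
Proof.
  intros HH Ht. pose proof (pic_tail G1 G2 L M x0 y0 HH) as HT.
  destruct HH as (HL & HM & _).
  set (A := M / (2 * L)). set (e := exp (4 * L * t)).
  assert (HA : 0 <= 4 * A * e).
  { apply Rmult_le_pos. apply Rmult_le_pos. lra. apply Rlt_le, Rdiv_lt_0_compat; lra. apply Rlt_le, exp_pos. }
  assert (Hb : forall k m, (m >= k)%nat ->
    Rabs (px G1 G2 x0 y0 m t - px G1 G2 x0 y0 k t) + Rabs (py G1 G2 x0 y0 m t - py G1 G2 x0 y0 k t)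
      <= 2 * A * (/2)^k * e).
  { intros k m Hm. replace m with ((m - k) + k)%nat by lia. eapply Rle_trans. apply HT; auto.
    fold A e. assert (0 <= 2 * A * (/2)^k * e).
    { apply Rmult_le_pos. apply Rmult_le_pos. apply Rmult_le_pos. lra. apply Rlt_le, Rdiv_lt_0_compat; lra.
      apply pow_le; lra. apply Rlt_le, exp_pos. }
    assert (0 <= (/2)^(m-k)) by (apply pow_le; lra). nra. }
  split; intros eps; destruct (geom_small (4 * A * e) eps HA (cond_pos eps)) as [N HN];
    exists N; intros n m Hn Hm; specialize (HN N (le_n N));
    pose proof (Hb N n Hn); pose proof (Hb N m Hm);
    pose proof (Rabs_pos (px G1 G2 x0 y0 n t - px G1 G2 x0 y0 N t));
    pose proof (Rabs_pos (py G1 G2 x0 y0 n t - py G1 G2 x0 y0 N t));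
    pose proof (Rabs_pos (px G1 G2 x0 y0 m t - px G1 G2 x0 y0 N t));
    pose proof (Rabs_pos (py G1 G2 x0 y0 m t - py G1 G2 x0 y0 N t)).
  - pose proof (Rabs_triang (px G1 G2 x0 y0 n t - px G1 G2 x0 y0 N t) (px G1 G2 x0 y0 N t - px G1 G2 x0 y0 m t)).
    replace (px G1 G2 x0 y0 n t - px G1 G2 x0 y0 N t + (px G1 G2 x0 y0 N t - px G1 G2 x0 y0 m t))
      with (px G1 G2 x0 y0 n t - px G1 G2 x0 y0 m t) in * by ring.
    pose proof (Rabs_minus_sym (px G1 G2 x0 y0 N t) (px G1 G2 x0 y0 m t)).
    replace (4 * A * e * (/2)^N) with (2 * (2 * A * (/2)^N * e)) in HN by ring. lra.
  - pose proof (Rabs_triang (py G1 G2 x0 y0 n t - py G1 G2 x0 y0 N t) (py G1 G2 x0 y0 N t - py G1 G2 x0 y0 m t)).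
    replace (py G1 G2 x0 y0 n t - py G1 G2 x0 y0 N t + (py G1 G2 x0 y0 N t - py G1 G2 x0 y0 m t))
      with (py G1 G2 x0 y0 n t - py G1 G2 x0 y0 m t) in * by ring.
    pose proof (Rabs_minus_sym (py G1 G2 x0 y0 N t) (py G1 G2 x0 y0 m t)).
    replace (4 * A * e * (/2)^N) with (2 * (2 * A * (/2)^N * e)) in HN by ring. lra.
Qed.

Lemma Rmax0_lip s t : Rabs (Rmax 0 t - Rmax 0 s) <= Rabs (t - s).
Proof. unfold Rmax. destruct (Rle_dec 0 t); destruct (Rle_dec 0 s);
  unfold Rabs; repeat destruct Rcase_abs; lra. Qed.

Lemma sol_lim G1 G2 L M x0 y0 t : hyps G1 G2 L M -> 0 <= t ->
  is_lim_seq (fun k => px G1 G2 x0 y0 k t) (solX G1 G2 x0 y0 t) /\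
  is_lim_seq (fun k => py G1 G2 x0 y0 k t) (solY G1 G2 x0 y0 t).
Proof.
  intros HH Ht. unfold solX, solY. rewrite Rmax_right by lra.
  destruct (pic_cauchy G1 G2 L M x0 y0 t HH Ht) as [C1 C2].
  destruct (proj2 (ex_lim_seq_cauchy_corr _) C1) as [l1 H1].
  destruct (proj2 (ex_lim_seq_cauchy_corr _) C2) as [l2 H2].
  rewrite (is_lim_seq_unique _ _ H1), (is_lim_seq_unique _ _ H2). simpl. auto.
Qed.

Lemma sol_tail G1 G2 L M x0 y0 k t : hyps G1 G2 L M -> 0 <= t ->
  Rabs (solX G1 G2 x0 y0 t - px G1 G2 x0 y0 k t) + Rabs (solY G1 G2 x0 y0 t - py G1 G2 x0 y0 k t)
    <= 2 * (M / (2 * L)) * (/2) ^ k * exp (4 * L * t).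
Proof.
  intros HH Ht. destruct (sol_lim G1 G2 L M x0 y0 t HH Ht) as [l1 l2].
  pose proof (pic_tail G1 G2 L M x0 y0 HH k) as HT.
  destruct HH as (HL & HM & _).
  apply (is_lim_seq_incr_n _ k) in l1. apply (is_lim_seq_incr_n _ k) in l2.
  assert (Hl := is_lim_seq_plus' _ _ _ _
     (is_lim_seq_abs _ _ (is_lim_seq_minus' _ _ _ _ l1 (is_lim_seq_const (px G1 G2 x0 y0 k t))))
     (is_lim_seq_abs _ _ (is_lim_seq_minus' _ _ _ _ l2 (is_lim_seq_const (py G1 G2 x0 y0 k t))))).
  simpl in Hl.
  assert (Hc := is_lim_seq_const (2 * (M / (2 * L)) * (/2) ^ k * exp (4 * L * t))).
  refine (is_lim_seq_le _ _ _ _ _ Hl Hc). intros m. simpl.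
  eapply Rle_trans. apply HT. exact Ht.
  assert (0 <= 2 * (M / (2 * L)) * (/2) ^ k * exp (4 * L * t)).
  { apply Rmult_le_pos. apply Rmult_le_pos. apply Rmult_le_pos. lra. apply Rlt_le, Rdiv_lt_0_compat; lra.
    apply pow_le; lra. apply Rlt_le, exp_pos. }
  assert (0 <= (/2)^m) by (apply pow_le; lra). nra.
Qed.

Lemma sol_lip G1 G2 L M x0 y0 : hyps G1 G2 L M ->
  LipF (solX G1 G2 x0 y0) M /\ LipF (solY G1 G2 x0 y0) M.
Proof.
  intros HH. pose proof (pic_lip G1 G2 L M x0 y0 HH) as HP.
  assert (HM : 0 < M) by (destruct HH as (_ & ? & _); auto).
  split; intros s t.
  - destruct (sol_lim G1 G2 L M x0 y0 (Rmax 0 s) HH (Rmax_l _ _)) as [l1 _].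
    destruct (sol_lim G1 G2 L M x0 y0 (Rmax 0 t) HH (Rmax_l _ _)) as [l2 _].
    assert (E1 : solX G1 G2 x0 y0 (Rmax 0 s) = solX G1 G2 x0 y0 s).
    { unfold solX. rewrite (Rmax_right 0 (Rmax 0 s)) by apply Rmax_l. reflexivity. }
    assert (E2 : solX G1 G2 x0 y0 (Rmax 0 t) = solX G1 G2 x0 y0 t).
    { unfold solX. rewrite (Rmax_right 0 (Rmax 0 t)) by apply Rmax_l. reflexivity. }
    rewrite E1 in l1. rewrite E2 in l2.
    assert (Hl := is_lim_seq_abs _ _ (is_lim_seq_minus' _ _ _ _ l1 l2)). simpl in Hl.
    assert (Hc := is_lim_seq_const (M * Rabs (s - t))).
    refine (is_lim_seq_le _ _ _ _ _ Hl Hc). intros m. simpl.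
    eapply Rle_trans. apply (proj1 (HP m)). apply Rmult_le_compat_l. lra.
    rewrite Rabs_minus_sym, (Rabs_minus_sym s). apply Rmax0_lip.
  - destruct (sol_lim G1 G2 L M x0 y0 (Rmax 0 s) HH (Rmax_l _ _)) as [_ l1].
    destruct (sol_lim G1 G2 L M x0 y0 (Rmax 0 t) HH (Rmax_l _ _)) as [_ l2].
    assert (E1 : solY G1 G2 x0 y0 (Rmax 0 s) = solY G1 G2 x0 y0 s).
    { unfold solY. rewrite (Rmax_right 0 (Rmax 0 s)) by apply Rmax_l. reflexivity. }
    assert (E2 : solY G1 G2 x0 y0 (Rmax 0 t) = solY G1 G2 x0 y0 t).
    { unfold solY. rewrite (Rmax_right 0 (Rmax 0 t)) by apply Rmax_l. reflexivity. }
    rewrite E1 in l1. rewrite E2 in l2.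
    assert (Hl := is_lim_seq_abs _ _ (is_lim_seq_minus' _ _ _ _ l1 l2)). simpl in Hl.
    assert (Hc := is_lim_seq_const (M * Rabs (s - t))).
    refine (is_lim_seq_le _ _ _ _ _ Hl Hc). intros m. simpl.
    eapply Rle_trans. apply (proj2 (HP m)). apply Rmult_le_compat_l. lra.
    rewrite Rabs_minus_sym, (Rabs_minus_sym s). apply Rmax0_lip.
Qed.

Lemma half_pow_le1 k : (/2)^k <= 1.
Proof. induction k; simpl. lra. assert (0 <= (/2)^k) by (apply pow_le; lra). lra. Qed.

Lemma sol_int G1 G2 L M x0 y0 t : hyps G1 G2 L M -> 0 <= t ->
  solX G1 G2 x0 y0 t = x0 + RInt (fun s => G1 (solX G1 G2 x0 y0 s) (solY G1 G2 x0 y0 s)) 0 t /\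
  solY G1 G2 x0 y0 t = y0 + RInt (fun s => G2 (solX G1 G2 x0 y0 s) (solY G1 G2 x0 y0 s)) 0 t.
Proof.
  intros HH Ht. pose proof (sol_lip G1 G2 L M x0 y0 HH) as [LX LY].
  pose proof (pic_lip G1 G2 L M x0 y0 HH) as HP.
  pose proof (fun k => sol_tail G1 G2 L M x0 y0 k t HH Ht) as HT.
  assert (HT' : forall k s, 0 <= s ->
    Rabs (px G1 G2 x0 y0 k s - solX G1 G2 x0 y0 s) + Rabs (py G1 G2 x0 y0 k s - solY G1 G2 x0 y0 s)
     <= (2 * (M / (2 * L)) * (/2) ^ k) * exp (4 * L * s)).
  { intros k s Hs. rewrite Rabs_minus_sym, (Rabs_minus_sym (py _ _ _ _ _ _)). apply sol_tail; auto. }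
  destruct HH as (HL & HM & H1 & H2 & B1 & B2).
  set (A := M / (2 * L)) in *. set (e := exp (4 * L * t)) in *.
  assert (HA : 0 < A) by (apply Rdiv_lt_0_compat; lra).
  assert (He : 0 < e) by apply exp_pos.
  split; apply Rminus_diag_uniq; eapply (zero_of_geom _ (2 * A * e + A * e)); intros k;
    destruct (HP k) as [Lxk Lyk]; specialize (HT (S k)); simpl pow in HT;
    assert (0 < (/2)^k) by (apply pow_lt; lra);
    assert ((/2)^k <= 1) by (apply half_pow_le1).
  - assert (SB := step_bound G1 L (2 * A * (/2)^k) _ _ _ _ M t Ht HL
      ltac:(apply Rmult_le_pos; [lra|apply pow_le; lra]) H1 LX LY Lxk Lyk (HT' k)).
    fold e in SB. pose proof (px_S G1 G2 x0 y0 k t) as Ek.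
    realify (RInt (fun s => G1 (px G1 G2 x0 y0 k s) (py G1 G2 x0 y0 k s)) 0 t).
    realify (RInt (fun s : R => G1 (solX G1 G2 x0 y0 s) (solY G1 G2 x0 y0 s)) 0 t).
    set (a := solX G1 G2 x0 y0 t) in *. set (b := px G1 G2 x0 y0 (S k) t) in *.
    pose proof (Rabs_pos (solY G1 G2 x0 y0 t - py G1 G2 x0 y0 (S k) t)).
    pose proof (Rabs_triang (a - b) (r - r0)) as Htri.
    replace (a - b + (r - r0)) with (a - (x0 + r0)) in Htri by (rewrite Ek; ring).
    assert (SB' : L * (2 * A * (/ 2) ^ k) * (e - 1) / (4 * L) <= A * (/2)^k * e / 2).
    { apply Rle_trans with (A * (/2)^k * (e - 1) / 2).
      right. field. lra. nra. }
    set (p := (/2)^k) in *. assert (0 <= A * p * e) by (apply Rmult_le_pos; [apply Rmult_le_pos|]; lra). lra.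
  - assert (SB := step_bound G2 L (2 * A * (/2)^k) _ _ _ _ M t Ht HL
      ltac:(apply Rmult_le_pos; [lra|apply pow_le; lra]) H2 LX LY Lxk Lyk (HT' k)).
    fold e in SB. pose proof (py_S G1 G2 x0 y0 k t) as Ek.
    realify (RInt (fun s => G2 (px G1 G2 x0 y0 k s) (py G1 G2 x0 y0 k s)) 0 t).
    realify (RInt (fun s : R => G2 (solX G1 G2 x0 y0 s) (solY G1 G2 x0 y0 s)) 0 t).
    set (a := solY G1 G2 x0 y0 t) in *. set (b := py G1 G2 x0 y0 (S k) t) in *.
    pose proof (Rabs_pos (solX G1 G2 x0 y0 t - px G1 G2 x0 y0 (S k) t)).
    pose proof (Rabs_triang (a - b) (r - r0)) as Htri.
    replace (a - b + (r - r0)) with (a - (y0 + r0)) in Htri by (rewrite Ek; ring).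
    assert (SB' : L * (2 * A * (/ 2) ^ k) * (e - 1) / (4 * L) <= A * (/2)^k * e / 2).
    { apply Rle_trans with (A * (/2)^k * (e - 1) / 2).
      right. field. lra. nra. }
    set (p := (/2)^k) in *. assert (0 <= A * p * e) by (apply Rmult_le_pos; [apply Rmult_le_pos|]; lra). lra.
Qed.

Lemma deriv_of_int (X g : R -> R) x0 t K : 0 < t -> LipF g K ->
  (forall s, 0 <= s -> X s = x0 + RInt g 0 s) -> is_derive X t (g t).
Proof.
  intros Ht Lg HX.
  assert (D : is_derive (fun s => X s - x0) t (g t)).
  { apply is_derive_RInt with 0. apply locally_of_delta. exists t. split; auto.
    intros y Hy. apply Rabs_def2 in Hy.
    replace (X y - x0) with (RInt g 0 y : R).
    apply (RInt_correct (V:=R_CompleteNormedModule)). eapply LipF_RInt; eauto.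
    rewrite (HX y) by lra. realify (RInt g 0 y). ring.
    eapply LipF_cont; eauto. }
  apply (is_derive_ext (fun s => X s - x0 + x0)). intros u. unfold Rminus. rewrite Rplus_assoc, Rplus_opp_l, Rplus_0_r. reflexivity.
  apply is_derive_Reals. replace (g t) with (g t + 0) by ring.
  apply (derivable_pt_lim_plus (fun s => X s - x0) (fun _ => x0)).
  apply is_derive_Reals; exact D. apply derivable_pt_lim_const.
Qed.

Lemma pic_at0 G1 G2 x0 y0 k : px G1 G2 x0 y0 k 0 = x0 /\ py G1 G2 x0 y0 k 0 = y0.
Proof.
  destruct k. split; reflexivity.
  rewrite px_S, py_S, !RInt_point. split; apply Rplus_0_r.
Qed.

Theorem global_exist G1 G2 L M x0 y0 : hyps G1 G2 L M ->
  solX G1 G2 x0 y0 0 = x0 /\ solY G1 G2 x0 y0 0 = y0 /\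
  LipF (solX G1 G2 x0 y0) M /\ LipF (solY G1 G2 x0 y0) M /\
  forall t, 0 < t -> is_derive (solX G1 G2 x0 y0) t (G1 (solX G1 G2 x0 y0 t) (solY G1 G2 x0 y0 t)) /\
                    is_derive (solY G1 G2 x0 y0) t (G2 (solX G1 G2 x0 y0 t) (solY G1 G2 x0 y0 t)).
Proof.
  intros HH. pose proof (sol_lip G1 G2 L M x0 y0 HH) as [LX LY].
  assert (HL : 0 < L) by (destruct HH; auto).
  assert (G1L : glip G1 L) by (destruct HH as (_ & _ & ? & _); auto).
  assert (G2L : glip G2 L) by (destruct HH as (_ & _ & _ & ? & _); auto).
  split; [|split; [|split; [exact LX|split; [exact LY|]]]].
  - unfold solX. rewrite Rmax_left by lra.
    rewrite (Lim_seq_ext _ (fun _ => x0)) by (intros; apply pic_at0). rewrite Lim_seq_const. reflexivity.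
  - unfold solY. rewrite Rmax_left by lra.
    rewrite (Lim_seq_ext _ (fun _ => y0)) by (intros; apply pic_at0). rewrite Lim_seq_const. reflexivity.
  - intros t Ht. split.
    + eapply (deriv_of_int _ (fun s => G1 (solX G1 G2 x0 y0 s) (solY G1 G2 x0 y0 s)) x0 t). exact Ht.
      apply LipF_comp; eauto. lra. intros s Hs. apply (sol_int G1 G2 L M x0 y0 s HH Hs).
    + eapply (deriv_of_int _ (fun s => G2 (solX G1 G2 x0 y0 s) (solY G1 G2 x0 y0 s)) y0 t). exact Ht.
      apply LipF_comp; eauto. lra. intros s Hs. apply (sol_int G1 G2 L M x0 y0 s HH Hs).
Qed.

Lemma D_mult (f g : R -> R) x df dg : is_derive f x df -> is_derive g x dg ->
  is_derive (fun t => f t * g t) x (df * g x + f x * dg).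
Proof. intros H1 H2. apply is_derive_Reals. apply is_derive_Reals in H1, H2.
  exact (derivable_pt_lim_mult f g x df dg H1 H2). Qed.
Lemma D_plus (f g : R -> R) x df dg : is_derive f x df -> is_derive g x dg ->
  is_derive (fun t => f t + g t) x (df + dg).
Proof. intros H1 H2. apply is_derive_Reals. apply is_derive_Reals in H1, H2.
  exact (derivable_pt_lim_plus f g x df dg H1 H2). Qed.
Lemma D_minus (f g : R -> R) x df dg : is_derive f x df -> is_derive g x dg ->
  is_derive (fun t => f t - g t) x (df - dg).
Proof. intros H1 H2. apply is_derive_Reals. apply is_derive_Reals in H1, H2.
  exact (derivable_pt_lim_minus f g x df dg H1 H2). Qed.
Lemma D_scal (f : R -> R) k x df : is_derive f x df -> is_derive (fun t => k * f t) x (k * df).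
Proof. intros H. apply (is_derive_scal f x k df H). Qed.
Lemma D_expk k x : is_derive (fun t => exp (k * t)) x (k * exp (k * x)).
Proof. auto_derive; auto. ring. Qed.
Lemma D_ext (f g : R -> R) (x d d' : R) : (forall t, f t = g t) -> d = d' -> is_derive f x d -> is_derive g x d'.
Proof. intros H1 H2 H3. rewrite <- H2. apply (is_derive_ext f g x d H1 H3). Qed.

Lemma uniq G1 G2 L T (u1 u2 w1 w2 : R -> R) : 0 <= L -> glip G1 L -> glip G2 L ->
  u1 0 = w1 0 -> u2 0 = w2 0 ->
  filterlim u1 (at_right 0) (locally (u1 0)) -> filterlim u2 (at_right 0) (locally (u2 0)) ->
  filterlim w1 (at_right 0) (locally (w1 0)) -> filterlim w2 (at_right 0) (locally (w2 0)) ->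
  (forall t, 0 < t < T -> is_derive u1 t (G1 (u1 t) (u2 t)) /\ is_derive u2 t (G2 (u1 t) (u2 t)) /\
                         is_derive w1 t (G1 (w1 t) (w2 t)) /\ is_derive w2 t (G2 (w1 t) (w2 t))) ->
  forall t, 0 <= t < T -> u1 t = w1 t /\ u2 t = w2 t.
Proof.
  intros HL H1 H2 E1 E2 C1 C2 C3 C4 HD t [Ht0 HtT].
  destruct (Req_dec t 0) as [->|Htn]; [auto|].
  assert (Ht : 0 < t) by lra.
  set (phi := fun s => (u1 s - w1 s) * (u1 s - w1 s) + (u2 s - w2 s) * (u2 s - w2 s)).
  set (psi := fun s => phi s * exp (- (4 * L) * s)).
  set (dphi := fun s => 2 * (u1 s - w1 s) * (G1 (u1 s) (u2 s) - G1 (w1 s) (w2 s)) +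
                        2 * (u2 s - w2 s) * (G2 (u1 s) (u2 s) - G2 (w1 s) (w2 s))).
  set (dpsi := fun s => dphi s * exp (- (4 * L) * s) + phi s * (- (4 * L) * exp (- (4 * L) * s))).
  assert (Dpsi : forall s, 0 < s < T -> is_derive psi s (dpsi s)).
  { intros s Hs. destruct (HD s Hs) as (d1 & d2 & d3 & d4).
    unfold psi, dpsi. apply (D_mult phi (fun s => exp (- (4 * L) * s))); [|apply D_expk].
    assert (A1 := D_minus _ _ _ _ _ d1 d3). assert (A2 := D_minus _ _ _ _ _ d2 d4).
    eapply D_ext; [intros; reflexivity| |apply (D_plus _ _ _ _ _ (D_mult _ _ _ _ _ A1 A1) (D_mult _ _ _ _ _ A2 A2))].
    unfold dphi. ring. }
  assert (Hneg : forall s, 0 < s < T -> dpsi s <= 0).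
  { intros s Hs. unfold dpsi.
    assert (dphi s <= 4 * L * phi s).
    { unfold dphi, phi.
      specialize (H1 (u1 s) (u2 s) (w1 s) (w2 s)). specialize (H2 (u1 s) (u2 s) (w1 s) (w2 s)).
      set (a := u1 s - w1 s) in *. set (b := u2 s - w2 s) in *.
      set (p := G1 (u1 s) (u2 s) - G1 (w1 s) (w2 s)) in *.
      set (q := G2 (u1 s) (u2 s) - G2 (w1 s) (w2 s)) in *.
      assert (a * p <= Rabs a * Rabs p). { rewrite <- Rabs_mult. apply Rle_abs. }
      assert (b * q <= Rabs b * Rabs q). { rewrite <- Rabs_mult. apply Rle_abs. }
      pose proof (Rabs_pos a). pose proof (Rabs_pos b).
      assert (Rabs a * Rabs p <= Rabs a * (L * (Rabs a + Rabs b))) by (apply Rmult_le_compat_l; auto).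
      assert (Rabs b * Rabs q <= Rabs b * (L * (Rabs a + Rabs b))) by (apply Rmult_le_compat_l; auto).
      assert (Ea : a * a = Rabs a * Rabs a) by (rewrite <- Rabs_mult, Rabs_right; [auto| apply Rle_ge; nra]).
      assert (Eb : b * b = Rabs b * Rabs b) by (rewrite <- Rabs_mult, Rabs_right; [auto| apply Rle_ge; nra]).
      assert (0 <= L * ((Rabs a - Rabs b) * (Rabs a - Rabs b))) by (apply Rmult_le_pos; [lra | apply Rle_0_sqr]).
      assert (2 * a * p + 2 * b * q <= 4 * L * (a * a + b * b)).
      { rewrite Ea, Eb. set (A := Rabs a) in *. set (B := Rabs b) in *. nra. }
      lra. }
    pose proof (exp_pos (- (4 * L) * s)). nra. }
  assert (Hmon : forall e, 0 < e < t -> psi t <= psi e).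
  { intros e He. destruct (mvt psi dpsi e t) as [c [Hc Hm]]. lra.
    intros s Hs. apply Dpsi. lra.
    assert (dpsi c <= 0) by (apply Hneg; lra). nra. }
  assert (Hphi0 : forall s, 0 <= phi s) by (intros; unfold phi; apply Rplus_le_le_0_compat; apply Rle_0_sqr).
  assert (Hpsi : psi t <= 0).
  { apply Rnot_lt_le. intros Hp.
    set (eta := sqrt (psi t / 16)).
    assert (Heta : 0 < eta) by (apply sqrt_lt_R0; lra).
    assert (Heta2 : eta * eta = psi t / 16) by (apply sqrt_sqrt; lra).
    destruct (right_cont_eps u1 _ C1 eta Heta) as [d1 [Hd1 R1]].
    destruct (right_cont_eps u2 _ C2 eta Heta) as [d2 [Hd2 R2]].
    destruct (right_cont_eps w1 _ C3 eta Heta) as [d3 [Hd3 R3]].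
    destruct (right_cont_eps w2 _ C4 eta Heta) as [d4 [Hd4 R4]].
    set (m := Rmin (Rmin (Rmin d1 d2) (Rmin d3 d4)) t).
    assert (Hm : 0 < m /\ m <= d1 /\ m <= d2 /\ m <= d3 /\ m <= d4 /\ m <= t).
    { unfold m. pose proof (Rmin_l (Rmin (Rmin d1 d2) (Rmin d3 d4)) t).
      pose proof (Rmin_r (Rmin (Rmin d1 d2) (Rmin d3 d4)) t).
      pose proof (Rmin_l (Rmin d1 d2) (Rmin d3 d4)). pose proof (Rmin_r (Rmin d1 d2) (Rmin d3 d4)).
      pose proof (Rmin_l d1 d2). pose proof (Rmin_r d1 d2). pose proof (Rmin_l d3 d4). pose proof (Rmin_r d3 d4).
      repeat split; try lra. repeat apply Rmin_case; lra. }
    set (e := m / 2).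
    specialize (R1 e ltac:(unfold e; lra)). specialize (R2 e ltac:(unfold e; lra)).
    specialize (R3 e ltac:(unfold e; lra)). specialize (R4 e ltac:(unfold e; lra)).
    specialize (Hmon e ltac:(unfold e; lra)).
    assert (psi e <= phi e).
    { unfold psi. pose proof (Hphi0 e). assert (exp (- (4 * L) * e) <= 1).
      { rewrite <- exp_0. destruct (Req_dec L 0) as [->|]. right. f_equal. ring.
        left. apply exp_increasing. assert (0 < e) by (unfold e; lra). nra. }
      nra. }
    assert (phi e < psi t).
    { unfold phi. rewrite E1, E2 in *.
      apply Rabs_def2 in R1. apply Rabs_def2 in R2. apply Rabs_def2 in R3. apply Rabs_def2 in R4.
      assert (Rabs (u1 e - w1 e) < 2 * eta) by (apply Rabs_def1; lra).
      assert (Rabs (u2 e - w2 e) < 2 * eta) by (apply Rabs_def1; lra).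
      assert ((u1 e - w1 e) * (u1 e - w1 e) = Rabs (u1 e - w1 e) * Rabs (u1 e - w1 e)).
      { rewrite <- Rabs_mult, Rabs_right; auto. apply Rle_ge, Rle_0_sqr. }
      assert ((u2 e - w2 e) * (u2 e - w2 e) = Rabs (u2 e - w2 e) * Rabs (u2 e - w2 e)).
      { rewrite <- Rabs_mult, Rabs_right; auto. apply Rle_ge, Rle_0_sqr. }
      pose proof (Rabs_pos (u1 e - w1 e)). pose proof (Rabs_pos (u2 e - w2 e)).
      assert (Rabs (u1 e - w1 e) * Rabs (u1 e - w1 e) <= (2 * eta) * (2 * eta)) by (apply Rmult_le_compat; lra).
      assert (Rabs (u2 e - w2 e) * Rabs (u2 e - w2 e) <= (2 * eta) * (2 * eta)) by (apply Rmult_le_compat; lra).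
      lra. }
    lra. }
  assert (phi t <= 0).
  { unfold psi in Hpsi. pose proof (exp_pos (- (4 * L) * t)). pose proof (Hphi0 t).
    set (E := exp (- (4 * L) * t)) in *. set (F := phi t) in *. nra. }
  unfold phi in *. pose proof (Rle_0_sqr (u1 t - w1 t)). pose proof (Rle_0_sqr (u2 t - w2 t)).
  unfold Rsqr in *. split; apply Rminus_diag_uniq; apply Rsqr_0_uniq; unfold Rsqr; lra.
Qed.

Definition sol (F1 F2 : R -> R -> R) x0 y0 T (u w : R -> R) : Prop :=
  u 0 = x0 /\ w 0 = y0 /\ filterlim u (at_right 0) (locally x0) /\
  filterlim w (at_right 0) (locally y0) /\
  forall t, 0 < t < T -> is_derive u t (F1 (u t) (w t)) /\ is_derive w t (F2 (u t) (w t)).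

Definition locLip (F1 F2 : R -> R -> R) := forall r, 0 < r -> exists L, 0 < L /\
  forall x y x' y', Rabs x <= r -> Rabs y <= r -> Rabs x' <= r -> Rabs y' <= r ->
    Rabs (F1 x y - F1 x' y') <= L * (Rabs (x - x') + Rabs (y - y')) /\
    Rabs (F2 x y - F2 x' y') <= L * (Rabs (x - x') + Rabs (y - y')).

Definition cl r x := Rmax (- r) (Rmin r x).

Lemma cl_lip r x y : 0 <= r -> Rabs (cl r x - cl r y) <= Rabs (x - y).
Proof. intros. unfold cl, Rmax, Rmin. repeat destruct Rle_dec; unfold Rabs; repeat destruct Rcase_abs; lra. Qed.
Lemma cl_bound r x : 0 <= r -> Rabs (cl r x) <= r.
Proof. intros. unfold cl, Rmax, Rmin. repeat destruct Rle_dec; unfold Rabs; repeat destruct Rcase_abs; lra. Qed.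
Lemma cl_id r x : Rabs x <= r -> cl r x = x.
Proof. intros H. unfold cl, Rmax, Rmin. revert H. unfold Rabs. destruct Rcase_abs; repeat destruct Rle_dec; lra. Qed.

Definition Ftr (F : R -> R -> R) r x y := F (cl r x) (cl r y).
Definition Xr F1 F2 x0 y0 r := solX (Ftr F1 r) (Ftr F2 r) x0 y0.
Definition Yr F1 F2 x0 y0 r := solY (Ftr F1 r) (Ftr F2 r) x0 y0.

Lemma trunc_props F1 F2 x0 y0 r : locLip F1 F2 -> 0 < r ->
  exists L M, 0 < L /\ 0 < M /\ glip (Ftr F1 r) L /\ glip (Ftr F2 r) L /\
    LipF (Xr F1 F2 x0 y0 r) M /\ LipF (Yr F1 F2 x0 y0 r) M /\
    Xr F1 F2 x0 y0 r 0 = x0 /\ Yr F1 F2 x0 y0 r 0 = y0 /\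
    forall t, 0 < t ->
      is_derive (Xr F1 F2 x0 y0 r) t (Ftr F1 r (Xr F1 F2 x0 y0 r t) (Yr F1 F2 x0 y0 r t)) /\
      is_derive (Yr F1 F2 x0 y0 r) t (Ftr F2 r (Xr F1 F2 x0 y0 r t) (Yr F1 F2 x0 y0 r t)).
Proof.
  intros HF Hr. destruct (HF r Hr) as [L [HL HLip]].
  set (M := Rabs (F1 0 0) + Rabs (F2 0 0) + 2 * L * r + 1).
  assert (HM : 0 < M). { unfold M. pose proof (Rabs_pos (F1 0 0)). pose proof (Rabs_pos (F2 0 0)). nra. }
  assert (G1 : glip (Ftr F1 r) L).
  { intros x y x' y'. unfold Ftr. eapply Rle_trans. apply HLip; apply cl_bound; lra.
    pose proof (cl_lip r x x'). pose proof (cl_lip r y y'). apply Rmult_le_compat_l; lra. }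
  assert (G2 : glip (Ftr F2 r) L).
  { intros x y x' y'. unfold Ftr. eapply Rle_trans. apply HLip; apply cl_bound; lra.
    pose proof (cl_lip r x x'). pose proof (cl_lip r y y'). apply Rmult_le_compat_l; lra. }
  assert (HB : forall x y, Rabs (Ftr F1 r x y) <= M /\ Rabs (Ftr F2 r x y) <= M).
  { intros x y. unfold Ftr.
    assert (Hc : Rabs (cl r x) <= r /\ Rabs (cl r y) <= r) by (split; apply cl_bound; lra).
    assert (H0 : Rabs 0 <= r) by (rewrite Rabs_R0; lra).
    destruct (HLip (cl r x) (cl r y) 0 0 (proj1 Hc) (proj2 Hc) H0 H0) as [A1 A2].
    rewrite !Rminus_0_r in A1, A2.
    pose proof (Rabs_triang_inv (F1 (cl r x) (cl r y)) (F1 0 0)).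
    pose proof (Rabs_triang_inv (F2 (cl r x) (cl r y)) (F2 0 0)).
    pose proof (Rabs_pos (F1 0 0)). pose proof (Rabs_pos (F2 0 0)).
    assert (L * (Rabs (cl r x) + Rabs (cl r y)) <= L * (2 * r)) by (apply Rmult_le_compat_l; lra).
    unfold M. split; lra. }
  assert (HH : hyps (Ftr F1 r) (Ftr F2 r) L M).
  { repeat split; auto; intros; apply HB. }
  destruct (global_exist _ _ _ _ x0 y0 HH) as (A1 & A2 & A3 & A4 & A5).
  exists L, M. repeat split; auto; apply A5; auto.
Qed.

Lemma sol_mono F1 F2 x0 y0 T T' u w : T' <= T -> sol F1 F2 x0 y0 T u w -> sol F1 F2 x0 y0 T' u w.
Proof. intros H (A & B & C & D & E). split; [|split; [|split; [|split]]]; auto. intros s Hs. apply E. lra. Qed.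

Lemma Xr_right F1 F2 x0 y0 r : locLip F1 F2 -> 0 < r ->
  filterlim (Xr F1 F2 x0 y0 r) (at_right 0) (locally x0) /\
  filterlim (Yr F1 F2 x0 y0 r) (at_right 0) (locally y0).
Proof.
  intros HF Hr. destruct (trunc_props F1 F2 x0 y0 r HF Hr) as (L & M & HL & HM & _ & _ & LX & LY & X0 & Y0 & _).
  split.
  - rewrite <- X0 at 2. apply (right_cont_of_bound _ M). lra. intros s Hs.
    eapply Rle_trans. apply LX. rewrite Rminus_0_r, Rabs_right by lra. lra.
  - rewrite <- Y0 at 2. apply (right_cont_of_bound _ M). lra. intros s Hs.
    eapply Rle_trans. apply LY. rewrite Rminus_0_r, Rabs_right by lra. lra.
Qed.

Lemma agree_trunc F1 F2 x0 y0 r T u w : locLip F1 F2 -> 0 < r -> sol F1 F2 x0 y0 T u w ->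
  (forall s, 0 <= s < T -> Rabs (u s) <= r /\ Rabs (w s) <= r) ->
  forall s, 0 <= s < T -> Xr F1 F2 x0 y0 r s = u s /\ Yr F1 F2 x0 y0 r s = w s.
Proof.
  intros HF Hr (U0 & W0 & UC & WC & UD) Hbox.
  destruct (trunc_props F1 F2 x0 y0 r HF Hr) as (L & M & HL & HM & G1 & G2 & LX & LY & X0 & Y0 & XD).
  destruct (Xr_right F1 F2 x0 y0 r HF Hr) as [XC YC].
  apply (uniq (Ftr F1 r) (Ftr F2 r) L T); auto; try lra.
  - rewrite X0. exact XC.
  - rewrite Y0. exact YC.
  - rewrite U0. exact UC.
  - rewrite W0. exact WC.
  - intros t Ht. destruct (XD t (proj1 Ht)) as [D1 D2]. destruct (UD t Ht) as [D3 D4].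
    destruct (Hbox t ltac:(lra)) as [B1 B2].
    unfold Ftr at 3 4. rewrite (cl_id r (u t)), (cl_id r (w t)) by auto. auto.
Qed.

Lemma trunc_sol F1 F2 x0 y0 r T : locLip F1 F2 -> 0 < r ->
  (forall s, 0 <= s < T -> Rabs (Xr F1 F2 x0 y0 r s) <= r /\ Rabs (Yr F1 F2 x0 y0 r s) <= r) ->
  sol F1 F2 x0 y0 T (Xr F1 F2 x0 y0 r) (Yr F1 F2 x0 y0 r).
Proof.
  intros HF Hr Hbox.
  destruct (trunc_props F1 F2 x0 y0 r HF Hr) as (L & M & HL & HM & G1 & G2 & LX & LY & X0 & Y0 & XD).
  destruct (Xr_right F1 F2 x0 y0 r HF Hr) as [XC YC].
  split; [|split; [|split; [|split]]]; auto.
  intros t Ht. destruct (XD t (proj1 Ht)) as [D1 D2]. destruct (Hbox t ltac:(lra)) as [B1 B2].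
  unfold Ftr in D1, D2. rewrite !cl_id in D1, D2 by auto. auto.
Qed.

Lemma nat_above K : exists n : nat, K <= INR n.
Proof.
  destruct (Rle_or_lt K 0) as [H|H]. exists O. simpl. lra.
  destruct (archimed K) as [H1 _].
  assert (Hp : (0 < up K)%Z). { apply lt_IZR. lra. }
  exists (Z.to_nat (up K)). rewrite INR_IZR_INZ, Z2Nat.id by lia. lra.
Qed.

Lemma cont_of_sol F1 F2 x0 y0 T u w t : sol F1 F2 x0 y0 T u w -> 0 < t < T ->
  continuity_pt u t /\ continuity_pt w t.
Proof.
  intros (_ & _ & _ & _ & D) Ht. destruct (D t Ht) as [D1 D2].
  split; apply continuity_pt_filterlim; eapply deriv_cont; eauto.
Qed.

Lemma bounded_on F1 F2 x0 y0 T u w t : sol F1 F2 x0 y0 T u w -> 0 <= t < T ->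
  exists R, 0 < R /\ forall s, 0 <= s <= t -> Rabs (u s) <= R /\ Rabs (w s) <= R.
Proof.
  intros HS Ht. pose proof HS as (U0 & W0 & UC & WC & _).
  destruct (right_cont_eps u x0 UC 1 Rlt_0_1) as [du [Hdu Ru]].
  destruct (right_cont_eps w y0 WC 1 Rlt_0_1) as [dw [Hdw Rw]].
  set (a := Rmin du dw / 2).
  assert (Ha : 0 < a /\ a < du /\ a < dw).
  { unfold a. pose proof (Rmin_l du dw). pose proof (Rmin_r du dw).
    assert (0 < Rmin du dw) by (apply Rmin_case; lra). lra. }
  set (R1 := Rabs x0 + Rabs y0 + 1).
  assert (Hnear : forall s, 0 <= s <= a -> Rabs (u s) <= R1 /\ Rabs (w s) <= R1).
  { intros s Hs. pose proof (Rabs_pos x0). pose proof (Rabs_pos y0).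
    destruct (Req_dec s 0) as [->|Hs0].
    - rewrite U0, W0. unfold R1. lra.
    - specialize (Ru s ltac:(lra)). specialize (Rw s ltac:(lra)).
      pose proof (Rabs_triang_inv (u s) x0). pose proof (Rabs_triang_inv (w s) y0).
      unfold R1. lra. }
  destruct (Rle_or_lt t a) as [Hta|Hta].
  - exists R1. split. unfold R1. pose proof (Rabs_pos x0). pose proof (Rabs_pos y0). lra.
    intros s Hs. apply Hnear. lra.
  - assert (Hc : forall c, a <= c <= t -> continuity_pt (fun s => Rabs (u s)) c /\
                                         continuity_pt (fun s => Rabs (w s)) c).
    { intros c Hc. destruct (cont_of_sol _ _ _ _ _ _ _ c HS ltac:(lra)) as [C1 C2].
      split; apply (continuity_pt_comp _ Rabs); auto; apply Rcontinuity_abs. }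
    destruct (continuity_ab_maj (fun s => Rabs (u s)) a t ltac:(lra) (fun c H => proj1 (Hc c H))) as [mu [Hmu _]].
    destruct (continuity_ab_maj (fun s => Rabs (w s)) a t ltac:(lra) (fun c H => proj2 (Hc c H))) as [mw [Hmw _]].
    exists (R1 + Rabs (u mu) + Rabs (w mw)). pose proof (Rabs_pos (u mu)). pose proof (Rabs_pos (w mw)).
    split. unfold R1. pose proof (Rabs_pos x0). pose proof (Rabs_pos y0). lra.
    intros s Hs. destruct (Rle_or_lt s a) as [Hsa|Hsa].
    + destruct (Hnear s ltac:(lra)). lra.
    + specialize (Hmu s ltac:(lra)). specialize (Hmw s ltac:(lra)). simpl in Hmu, Hmw.
      assert (0 <= R1) by (unfold R1; pose proof (Rabs_pos x0); pose proof (Rabs_pos y0); lra). lra.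
Qed.

Definition rn x0 y0 (n : nat) := INR n + Rabs x0 + Rabs y0 + 1.

Lemma rn_pos x0 y0 n : 0 < rn x0 y0 n.
Proof. unfold rn. pose proof (pos_INR n). pose proof (Rabs_pos x0). pose proof (Rabs_pos y0). lra. Qed.

Lemma K1 F1 F2 x0 y0 T u w t : locLip F1 F2 -> sol F1 F2 x0 y0 T u w -> 0 <= t < T ->
  exists N, forall n, (N <= n)%nat -> forall s, 0 <= s <= t ->
    Xr F1 F2 x0 y0 (rn x0 y0 n) s = u s /\ Yr F1 F2 x0 y0 (rn x0 y0 n) s = w s.
Proof.
  intros HF HS Ht. set (t' := (t + T) / 2).
  destruct (bounded_on F1 F2 x0 y0 T u w t' HS ltac:(unfold t'; lra)) as [R [HR HB]].
  destruct (nat_above R) as [N HN]. exists N. intros n Hn s Hs.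
  apply (agree_trunc F1 F2 x0 y0 (rn x0 y0 n) t' u w HF (rn_pos x0 y0 n)).
  - apply (sol_mono _ _ _ _ T). unfold t'; lra. exact HS.
  - intros v Hv. destruct (HB v ltac:(lra)) as [B1 B2].
    assert (INR N <= INR n) by (apply le_INR; lia).
    assert (R <= rn x0 y0 n) by (unfold rn; pose proof (Rabs_pos x0); pose proof (Rabs_pos y0); lra).
    split; lra.
  - unfold t'; lra.
Qed.

Theorem maximal F1 F2 x0 y0 Tb C : locLip F1 F2 ->
  (forall T u w, 0 < T -> sol F1 F2 x0 y0 T u w -> T <= Tb) ->
  (forall T u w, sol F1 F2 x0 y0 T u w -> forall t1 t2, 0 < t1 -> t1 <= t2 -> t2 < T ->
     Rabs (u t1) + Rabs (w t1) <= C * (Rabs (u t2) + Rabs (w t2))) ->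
  exists Tmax u w, 0 < Tmax /\ sol F1 F2 x0 y0 Tmax u w /\
    (forall T u' w', 0 < T -> sol F1 F2 x0 y0 T u' w' ->
       T <= Tmax /\ forall t, 0 <= t < T -> u' t = u t /\ w' t = w t) /\
    filterlim (fun t => Rabs (u t) + Rabs (w t)) (at_left Tmax) (Rbar_locally p_infty).
Proof.
  intros HF Hb Hm.
  pose proof (Rabs_pos x0) as Px0. pose proof (Rabs_pos y0) as Py0.
  destruct (trunc_props F1 F2 x0 y0 (rn x0 y0 0) HF (rn_pos x0 y0 0))
    as (L0 & M0 & HL0 & HM0 & _ & _ & LX0 & LY0 & X00 & Y00 & _).
  set (h := 1 / M0).
  assert (Hh : 0 < h) by (unfold h; apply Rdiv_lt_0_compat; lra).
  assert (Hsmall : sol F1 F2 x0 y0 h (Xr F1 F2 x0 y0 (rn x0 y0 0)) (Yr F1 F2 x0 y0 (rn x0 y0 0))).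
  { apply trunc_sol; auto. apply rn_pos. intros s Hs.
    pose proof (LX0 s 0) as A1. pose proof (LY0 s 0) as A2. rewrite X00 in A1. rewrite Y00 in A2.
    rewrite Rminus_0_r in A1, A2. rewrite (Rabs_right s) in A1, A2 by lra.
    assert (M0 * s < 1). { apply Rmult_lt_reg_r with (/ M0). apply Rinv_0_lt_compat; lra.
      rewrite Rmult_1_l, Rmult_comm, <- Rmult_assoc, Rinv_l, Rmult_1_l by lra. unfold h in Hs. lra. }
    pose proof (Rabs_triang_inv (Xr F1 F2 x0 y0 (rn x0 y0 0) s) x0).
    pose proof (Rabs_triang_inv (Yr F1 F2 x0 y0 (rn x0 y0 0) s) y0).
    assert (rn x0 y0 0 = Rabs x0 + Rabs y0 + 1) by (unfold rn; simpl; ring). split; lra. }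
  set (E := fun T => 0 < T /\ exists u w, sol F1 F2 x0 y0 T u w).
  assert (HEb : bound E). { exists Tb. intros T [HT [u [w Hs]]]. eapply Hb; eauto. }
  assert (HEh : E h). { split; auto. eauto. }
  destruct (completeness E HEb (ex_intro _ h HEh)) as [Tmax [Hub Hlub]].
  assert (HTh : h <= Tmax) by (apply Hub; auto).
  set (zx := fun t => real (Lim_seq (fun n => Xr F1 F2 x0 y0 (rn x0 y0 n) t))).
  set (zy := fun t => real (Lim_seq (fun n => Yr F1 F2 x0 y0 (rn x0 y0 n) t))).
  assert (Hagree : forall T u w, sol F1 F2 x0 y0 T u w -> forall t, 0 <= t < T -> zx t = u t /\ zy t = w t).
  { intros T u w HS t Ht. destruct (K1 F1 F2 x0 y0 T u w t HF HS Ht) as [N HN].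
    unfold zx, zy.
    split.
    - rewrite (Lim_seq_ext_loc _ (fun _ => u t)), Lim_seq_const. reflexivity.
      exists N. intros n Hn. apply (HN n Hn t). lra.
    - rewrite (Lim_seq_ext_loc _ (fun _ => w t)), Lim_seq_const. reflexivity.
      exists N. intros n Hn. apply (HN n Hn t). lra. }
  assert (Hex : forall t, 0 < t < Tmax -> exists T u w, t < T /\ sol F1 F2 x0 y0 T u w).
  { intros t Ht. apply NNPP. intros Hn.
    assert (Hup : is_upper_bound E t).
    { intros T [HT [u [w HS]]]. apply Rnot_lt_le. intros HtT. apply Hn. exists T, u, w. auto. }
    specialize (Hlub t Hup). lra. }
  assert (Hsol : sol F1 F2 x0 y0 Tmax zx zy).
  { destruct (Xr_right F1 F2 x0 y0 (rn x0 y0 0) HF (rn_pos _ _ _)) as [XC YC].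
    assert (Hnear : at_right 0 (fun s => Xr F1 F2 x0 y0 (rn x0 y0 0) s = zx s /\
                                         Yr F1 F2 x0 y0 (rn x0 y0 0) s = zy s)).
    { apply at_right_of_delta. exists h. split; auto. intros s Hs.
      destruct (Hagree _ _ _ Hsmall s ltac:(lra)). auto. }
    destruct (Hagree _ _ _ Hsmall 0 ltac:(lra)) as [Z1 Z2].
    split; [|split; [|split; [|split]]].
    - rewrite Z1. exact X00.
    - rewrite Z2. exact Y00.
    - eapply filterlim_ext_loc; [|exact XC]. eapply filter_imp; [|exact Hnear]. intros s []; auto.
    - eapply filterlim_ext_loc; [|exact YC]. eapply filter_imp; [|exact Hnear]. intros s []; auto.
    - intros t Ht. destruct (Hex t Ht) as (T & u & w & HtT & HS).
      pose proof HS as (_ & _ & _ & _ & HD). destruct (HD t ltac:(lra)) as [D1 D2].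
      assert (Hloc : locally t (fun s => u s = zx s /\ w s = zy s)).
      { apply locally_of_delta. exists (Rmin t (T - t)). split. apply Rmin_case; lra.
        intros y Hy. pose proof (Rmin_l t (T - t)). pose proof (Rmin_r t (T - t)).
        apply Rabs_def2 in Hy. destruct (Hagree _ _ _ HS y ltac:(lra)). auto. }
      destruct (Hagree _ _ _ HS t ltac:(lra)) as [Z3 Z4]. rewrite Z3, Z4.
      split; eapply is_derive_ext_loc; try eassumption; eapply filter_imp; try exact Hloc; intros s []; auto. }
  exists Tmax, zx, zy. split; [lra|]. split; [exact Hsol|]. split.
  - intros T u w HT HS. split. apply Hub. split; eauto.
    intros t Ht. destruct (Hagree _ _ _ HS t Ht). auto.
  - assert (Unb : forall K, exists t2, 0 < t2 < Tmax /\ K < Rabs (zx t2) + Rabs (zy t2)).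
    { intros K. apply NNPP. intros Hn.
      assert (HK : forall t, 0 < t < Tmax -> Rabs (zx t) + Rabs (zy t) <= K).
      { intros t Ht. apply Rnot_lt_le. intros Hlt. apply Hn. exists t. auto. }
      set (K' := Rabs K + Rabs x0 + Rabs y0 + 1).
      assert (HK' : forall t, 0 <= t < Tmax -> Rabs (zx t) <= K' /\ Rabs (zy t) <= K').
      { intros t Ht. pose proof (Rabs_pos (zx t)). pose proof (Rabs_pos (zy t)).
        pose proof (Rle_abs K). destruct (Req_dec t 0) as [->|Ht0].
        - destruct Hsol as (S1 & S2 & _). rewrite S1, S2. unfold K'. pose proof (Rabs_pos K). lra.
        - specialize (HK t ltac:(lra)). unfold K'. lra. }
      destruct (nat_above (K' + 1)) as [n Hn'].
      set (r := rn x0 y0 n).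
      assert (Hr : K' + 1 <= r) by (unfold r, rn; lra).
      assert (HK'0 : 0 < K') by (unfold K'; pose proof (Rabs_pos K); lra).
      destruct (trunc_props F1 F2 x0 y0 r HF (rn_pos _ _ _))
        as (L & M & HL & HM & _ & _ & LX & LY & _ & _ & _).
      assert (Hag := agree_trunc F1 F2 x0 y0 r Tmax zx zy HF (rn_pos _ _ _) Hsol
                       ltac:(intros s Hs; destruct (HK' s Hs); split; lra)).
      set (eta := Rmin Tmax (1 / M) / 2).
      assert (Heta : 0 < eta /\ eta < Tmax /\ M * (2 * eta) <= 1).
      { unfold eta. pose proof (Rmin_l Tmax (1 / M)). pose proof (Rmin_r Tmax (1 / M)).
        assert (0 < Rmin Tmax (1 / M)) by (apply Rmin_case; [lra| apply Rdiv_lt_0_compat; lra]).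
        repeat split; try lra.
        replace (M * (2 * (Rmin Tmax (1 / M) / 2))) with (M * Rmin Tmax (1 / M)) by field.
        apply Rle_trans with (M * (1 / M)). apply Rmult_le_compat_l; lra. right; field; lra. }
      assert (HS2 : sol F1 F2 x0 y0 (Tmax + eta) (Xr F1 F2 x0 y0 r) (Yr F1 F2 x0 y0 r)).
      { apply trunc_sol; auto. apply rn_pos. intros s Hs.
        destruct (Rlt_or_le s Tmax) as [Hst|Hst].
        - destruct (Hag s ltac:(lra)) as [A1 A2]. rewrite A1, A2.
          destruct (HK' s ltac:(lra)). split; lra.
        - set (s' := Tmax - eta).
          destruct (Hag s' ltac:(unfold s'; lra)) as [A1 A2].
          destruct (HK' s' ltac:(unfold s'; lra)) as [B1 B2].
          pose proof (LX s s') as C1. pose proof (LY s s') as C2. rewrite A1 in C1. rewrite A2 in C2.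
          rewrite (Rabs_right (s - s')) in C1, C2 by (unfold s'; lra).
          assert (M * (s - s') <= 1).
          { apply Rle_trans with (M * (2 * eta)). apply Rmult_le_compat_l. lra. unfold s'. lra. lra. }
          pose proof (Rabs_triang_inv (Xr F1 F2 x0 y0 r s) (zx s')).
          pose proof (Rabs_triang_inv (Yr F1 F2 x0 y0 r s) (zy s')).
          split; lra. }
      assert (E (Tmax + eta)) by (split; [lra| eauto]).
      assert (Tmax + eta <= Tmax) by (apply Hub; auto). lra. }
    intros P [M HP].
    destruct (Unb (Rabs C * (Rabs M + 1))) as [t2 [Ht2 Hbig]].
    exists (mkposreal (Tmax - t2) ltac:(lra)). intros y Hy Hlt.
    change (Rabs (y - Tmax) < Tmax - t2) in Hy. apply Rabs_def2 in Hy.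
    apply HP.
    pose proof (Hm Tmax zx zy Hsol t2 y ltac:(lra) ltac:(lra) ltac:(lra)) as Hc.
    set (Z := Rabs (zx y) + Rabs (zy y)) in *.
    assert (HZ : 0 <= Z) by (unfold Z; pose proof (Rabs_pos (zx y)); pose proof (Rabs_pos (zy y)); lra).
    pose proof (Rabs_pos M). pose proof (Rle_abs M).
    destruct (Rle_or_lt C 0) as [HC|HC].
    + assert (C * Z <= 0) by nra. pose proof (Rabs_pos C). nra.
    + rewrite Rabs_right in Hbig by lra.
      assert (C * (Rabs M + 1) < C * Z) by lra.
      assert (Rabs M + 1 < Z) by (apply Rmult_lt_reg_l with C; lra). lra.
Qed.

Lemma cont_neg_contra (g : R -> R) d t1 : is_derive g t1 d -> g t1 < 0 -> 0 < t1 ->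
  (forall r, 0 <= r < t1 -> 0 < g r) -> False.
Proof.
  intros D Hn Ht H. assert (C : continuous (fun s => - g s) t1).
  { apply continuity_pt_filterlim. apply continuity_pt_opp. apply continuity_pt_filterlim.
    eapply deriv_cont; eauto. }
  destruct (cont_pos_nbhd _ _ C ltac:(lra)) as [del [Hd Hd']].
  set (r := Rmax 0 (t1 - del / 2)).
  assert (0 <= r < t1 /\ Rabs (r - t1) < del).
  { unfold r, Rmax. destruct Rle_dec; split; try split; try lra; rewrite Rabs_left; lra. }
  specialize (Hd' r (proj2 H0)). specialize (H r (proj1 H0)). lra.
Qed.

Lemma deriv_contra (g : R -> R) d t1 : is_derive g t1 d -> 0 < d -> g t1 = 0 -> 0 < t1 ->
  (forall r, 0 <= r < t1 -> 0 < g r) -> False.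
Proof.
  intros D Hd H0 Ht H. destruct (deriv_pos_left g t1 d D Hd) as [eta [He He']].
  set (r := Rmax 0 (t1 - eta / 2)).
  assert (0 <= r < t1 /\ t1 - eta < r).
  { unfold r, Rmax. destruct Rle_dec; lra. }
  specialize (He' r ltac:(lra)). specialize (H r (proj1 H1)). lra.
Qed.

Lemma right_pos (g : R -> R) : filterlim g (at_right 0) (locally (g 0)) -> 0 < g 0 ->
  exists d, 0 < d /\ forall s, 0 <= s < d -> 0 < g s.
Proof.
  intros H Hp. destruct (right_cont_eps g _ H (g 0) Hp) as [d [Hd Hd']].
  exists d. split; auto. intros s Hs. destruct (Req_dec s 0) as [->|]; auto.
  specialize (Hd' s ltac:(lra)). apply Rabs_def2 in Hd'. lra.
Qed.

Lemma hitting T (g1 g2 g3 d1 d2 d3 : R -> R) :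
  0 < g1 0 -> 0 < g2 0 -> 0 < g3 0 ->
  filterlim g1 (at_right 0) (locally (g1 0)) -> filterlim g2 (at_right 0) (locally (g2 0)) ->
  filterlim g3 (at_right 0) (locally (g3 0)) ->
  (forall t, 0 < t < T -> is_derive g1 t (d1 t) /\ is_derive g2 t (d2 t) /\ is_derive g3 t (d3 t)) ->
  (forall t, 0 < t < T -> 0 <= g1 t -> 0 <= g2 t -> 0 <= g3 t ->
     (g1 t = 0 -> 0 < d1 t) /\ (g2 t = 0 -> 0 < d2 t) /\ (g3 t = 0 -> 0 < d3 t)) ->
  forall t, 0 <= t < T -> 0 < g1 t /\ 0 < g2 t /\ 0 < g3 t.
Proof.
  intros P1 P2 P3 C1 C2 C3 HD HB t0 Ht0.
  set (good := fun r => 0 < g1 r /\ 0 < g2 r /\ 0 < g3 r).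
  change (good t0). apply NNPP. intros Hbad.
  set (A := fun s => 0 <= s <= t0 /\ forall r, 0 <= r <= s -> good r).
  assert (HA0 : A 0).
  { split. lra. intros r Hr. replace r with 0 by lra. unfold good; auto. }
  assert (HAb : bound A). { exists t0. intros s [Hs _]. lra. }
  destruct (completeness A HAb (ex_intro A 0 HA0)) as [t1 [Hub Hlub]].
  assert (f1 : forall r, 0 <= r < t1 -> good r).
  { intros r Hr. apply NNPP. intros Hn.
    assert (is_upper_bound A r).
    { intros s [Hs Hs']. apply Rnot_lt_le. intros Hrs. apply Hn. apply Hs'. lra. }
    specialize (Hlub r H). lra. }
  assert (Ht0p : 0 < t0).
  { destruct (Req_dec t0 0) as [->|]. exfalso. apply Hbad. unfold good; auto. lra. }
  assert (f2 : 0 < t1).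
  { destruct (right_pos g1 C1 P1) as [e1 [He1 R1]].
    destruct (right_pos g2 C2 P2) as [e2 [He2 R2]].
    destruct (right_pos g3 C3 P3) as [e3 [He3 R3]].
    set (del := Rmin (Rmin e1 e2) (Rmin e3 t0) / 2).
    assert (Hdel : 0 < del /\ del < e1 /\ del < e2 /\ del < e3 /\ del < t0).
    { unfold del. pose proof (Rmin_l (Rmin e1 e2) (Rmin e3 t0)). pose proof (Rmin_r (Rmin e1 e2) (Rmin e3 t0)).
      pose proof (Rmin_l e1 e2). pose proof (Rmin_r e1 e2). pose proof (Rmin_l e3 t0). pose proof (Rmin_r e3 t0).
      assert (0 < Rmin (Rmin e1 e2) (Rmin e3 t0)) by (repeat apply Rmin_case; lra). lra. }
    assert (A del).
    { split. lra. intros r Hr. unfold good. split; [apply R1|split; [apply R2|apply R3]]; lra. }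
    specialize (Hub del H). lra. }
  assert (f3 : t1 <= t0). { apply Hlub. intros s [Hs _]. lra. }
  assert (Ht1T : 0 < t1 < T) by lra.
  destruct (HD t1 Ht1T) as (D1 & D2 & D3).
  assert (f1' : (forall r, 0 <= r < t1 -> 0 < g1 r) /\ (forall r, 0 <= r < t1 -> 0 < g2 r) /\
                (forall r, 0 <= r < t1 -> 0 < g3 r)).
  { split; [|split]; intros r Hr; apply f1 in Hr; apply Hr. }
  destruct f1' as (F1 & F2 & F3).
  assert (N1 : 0 <= g1 t1) by (apply Rnot_lt_le; intro Hn; exact (cont_neg_contra g1 _ t1 D1 Hn f2 F1)).
  assert (N2 : 0 <= g2 t1) by (apply Rnot_lt_le; intro Hn; exact (cont_neg_contra g2 _ t1 D2 Hn f2 F2)).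
  assert (N3 : 0 <= g3 t1) by (apply Rnot_lt_le; intro Hn; exact (cont_neg_contra g3 _ t1 D3 Hn f2 F3)).
  destruct (HB t1 Ht1T N1 N2 N3) as (E1 & E2 & E3).
  destruct (Req_dec (g1 t1) 0) as [Z|Z]. { exact (deriv_contra g1 _ t1 D1 (E1 Z) Z f2 F1). }
  destruct (Req_dec (g2 t1) 0) as [Z'|Z']. { exact (deriv_contra g2 _ t1 D2 (E2 Z') Z' f2 F2). }
  destruct (Req_dec (g3 t1) 0) as [Z''|Z'']. { exact (deriv_contra g3 _ t1 D3 (E3 Z'') Z'' f2 F3). }
  destruct (cont_pos_nbhd g1 t1 (deriv_cont _ _ _ D1) ltac:(lra)) as [e1 [He1 R1]].
  destruct (cont_pos_nbhd g2 t1 (deriv_cont _ _ _ D2) ltac:(lra)) as [e2 [He2 R2]].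
  destruct (cont_pos_nbhd g3 t1 (deriv_cont _ _ _ D3) ltac:(lra)) as [e3 [He3 R3]].
  destruct (Req_dec t1 t0) as [Et|Et].
  { apply Hbad. rewrite <- Et. unfold good. repeat split; lra. }
  set (del := Rmin (Rmin e1 e2) e3 / 2).
  assert (Hdel : 0 < del /\ del < e1 /\ del < e2 /\ del < e3).
  { unfold del. pose proof (Rmin_l (Rmin e1 e2) e3). pose proof (Rmin_r (Rmin e1 e2) e3).
    pose proof (Rmin_l e1 e2). pose proof (Rmin_r e1 e2).
    assert (0 < Rmin (Rmin e1 e2) e3) by (repeat apply Rmin_case; lra). lra. }
  set (s := Rmin (t1 + del) t0).
  assert (Hs : t1 < s <= t0 /\ s <= t1 + del).
  { unfold s. pose proof (Rmin_l (t1 + del) t0). pose proof (Rmin_r (t1 + del) t0).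
    split; [split|]; try lra. apply Rmin_case; lra. }
  assert (A s).
  { split. lra. intros r Hr. destruct (Rlt_or_le r t1) as [Hr1|Hr1]. apply f1; lra.
    assert (Rabs (r - t1) < e1 /\ Rabs (r - t1) < e2 /\ Rabs (r - t1) < e3)
      by (rewrite Rabs_right; lra).
    unfold good. split; [apply R1|split; [apply R2|apply R3]]; tauto. }
  specialize (Hub s H). lra.
Qed.

Lemma ode_blow (U dU : R -> R) T c : 0 < c ->
  (forall t, 0 < t < T -> 1 <= U t /\ is_derive U t (dU t) /\ c * U t ^ 4 <= dU t) ->
  T <= 1 / (3 * c).
Proof.
  intros Hc H. apply Rnot_lt_le. intros HT.
  set (b := 1 / (3 * c)). assert (Hb : 0 < b) by (unfold b; apply Rdiv_lt_0_compat; lra).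
  set (t := (b + T) / 2). set (t' := (t - b) / 2).
  assert (Ht : 0 < t' < t /\ t < T /\ b < t - t') by (unfold t', t; fold b in HT; lra).
  set (W := fun s => / (U s ^ 3)).
  set (dW := fun s => - (INR 3 * dU s * U s ^ Init.Nat.pred 3) / (U s ^ 3) ^ 2).
  destruct (mvt W dW t' t) as [c0 [Hc0 Hm]]. lra.
  { intros s Hs. destruct (H s ltac:(lra)) as (H1 & H2 & H3).
    unfold W, dW. apply (is_derive_inv (fun s => U s ^ 3)).
    apply is_derive_pow. exact H2. apply pow_nonzero. lra. }
  destruct (H c0 ltac:(lra)) as (U1 & _ & Ud).
  destruct (H t' ltac:(lra)) as (U2 & _ & _).
  destruct (H t ltac:(lra)) as (U3 & _ & _).
  assert (E : dW c0 = - 3 * (dU c0 / U c0 ^ 4)).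
  { unfold dW. simpl INR. simpl Init.Nat.pred. field. lra. }
  assert (c <= dU c0 / U c0 ^ 4).
  { apply Rmult_le_reg_r with (U c0 ^ 4). apply pow_lt; lra.
    unfold Rdiv. rewrite Rmult_assoc, Rinv_l, Rmult_1_r. exact Ud. apply pow_nonzero; lra. }
  assert (W t' <= 1).
  { unfold W. rewrite <- Rinv_1. apply Rinv_le_contravar. lra.
    replace 1 with (1 ^ 3) by ring. apply pow_incr. lra. }
  assert (0 < W t) by (unfold W; apply Rinv_0_lt_compat, pow_lt; lra).
  rewrite E in Hm.
  assert (3 * c * (t - t') > 1).
  { unfold b in Ht. destruct Ht as (_ & _ & Hb').
    apply Rmult_lt_compat_l with (r := 3 * c) in Hb'. 2: lra.
    replace (3 * c * (1 / (3 * c))) with 1 in Hb' by (field; lra). lra. }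
  assert (- 3 * (dU c0 / U c0 ^ 4) * (t - t') <= - 3 * c * (t - t')).
  { apply Rmult_le_compat_r. lra. lra. }
  lra.
Qed.

Definition Fa ga lam eps sB q (ba : R -> R) := fun x y => rhs_a lam eps sB q ba x y / ga.
Definition Fs gs lam eps sB q (bs : R -> R) := fun x y => rhs_s lam eps sB q bs x y / gs.

Lemma sol_iff ga gs lam eps sB q ba bs x0 y0 T u w : 0 < ga -> 0 < gs ->
  (is_solution ga gs lam eps sB q ba bs x0 y0 T u w <->
   sol (Fa ga lam eps sB q ba) (Fs gs lam eps sB q bs) x0 y0 T u w).
Proof.
  intros Ha Hs. unfold is_solution, sol. split.
  - intros (A & B & C & D & E). split; [|split; [|split; [|split]]]; auto.
    intros t Ht; destruct (E t Ht) as (da & ds & D1 & D2 & E1 & E2). split.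
    + assert (Hz : forall z : R, ga * z = rhs_a lam eps sB q ba (u t) (w t) -> z = Fa ga lam eps sB q ba (u t) (w t))
        by (intros z Hz; unfold Fa; rewrite <- Hz; field; lra).
      rewrite (Hz da E1) in D1. exact D1.
    + assert (Hz : forall z : R, gs * z = rhs_s lam eps sB q bs (u t) (w t) -> z = Fs gs lam eps sB q bs (u t) (w t))
        by (intros z Hz; unfold Fs; rewrite <- Hz; field; lra).
      rewrite (Hz ds E2) in D2. exact D2.
  - intros (A & B & C & D & E). split; [|split; [|split; [|split]]]; auto.
    intros t Ht. destruct (E t Ht) as (D1 & D2).
    exists (Fa ga lam eps sB q ba (u t) (w t)), (Fs gs lam eps sB q bs (u t) (w t)).
    split; [|split; [|split]]; auto; unfold Fa, Fs; field; lra.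
Qed.

Definition Pw v := Rabs v ^ 3 * v.

Lemma Pw_pos v : 0 <= v -> Pw v = v ^ 4.
Proof. intros H. unfold Pw. rewrite Rabs_right by lra. ring. Qed.
Lemma Pw_neg v : v <= 0 -> Pw v = - ((- v) ^ 4).
Proof. intros H. unfold Pw. rewrite Rabs_left1 by lra. ring. Qed.

Lemma cube_le a r : 0 <= a <= r -> a ^ 3 <= r ^ 3.
Proof. intros H. apply pow_incr. lra. Qed.

Lemma quart_diff a b r : 0 <= a <= r -> 0 <= b <= r -> Rabs (a ^ 4 - b ^ 4) <= 4 * r ^ 3 * Rabs (a - b).
Proof.
  intros Ha Hb.
  replace (a ^ 4 - b ^ 4) with ((a - b) * (a^3 + a^2 * b + a * b^2 + b^3)) by ring.
  rewrite Rabs_mult, Rmult_comm. apply Rmult_le_compat_r. apply Rabs_pos.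
  assert (0 <= a^2) by (apply pow_le; lra). assert (0 <= b^2) by (apply pow_le; lra).
  assert (0 <= a^3) by (apply pow_le; lra). assert (0 <= b^3) by (apply pow_le; lra).
  assert (a^2 <= r^2) by (apply pow_incr; lra). assert (b^2 <= r^2) by (apply pow_incr; lra).
  assert (a^3 <= r^3) by (apply pow_incr; lra). assert (b^3 <= r^3) by (apply pow_incr; lra).
  assert (a^2 * b <= r^2 * r) by (apply Rmult_le_compat; lra).
  assert (a * b^2 <= r * r^2) by (apply Rmult_le_compat; lra).
  assert (0 <= a^2 * b) by (apply Rmult_le_pos; lra). assert (0 <= a * b^2) by (apply Rmult_le_pos; lra).
  rewrite Rabs_right by lra. replace (r^3) with (r^2 * r) by ring. replace (r * r^2) with (r^2 * r) in * by ring.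
  replace (r^3) with (r^2*r) in * by ring. lra.
Qed.

Lemma quart_sum a b r : 0 <= a <= r -> 0 <= b <= r -> a ^ 4 + b ^ 4 <= r ^ 3 * (a + b).
Proof.
  intros Ha Hb. assert (a^3 <= r^3) by (apply pow_incr; lra). assert (b^3 <= r^3) by (apply pow_incr; lra).
  replace (a^4) with (a^3 * a) by ring. replace (b^4) with (b^3 * b) by ring.
  assert (a^3 * a <= r^3 * a) by (apply Rmult_le_compat_r; lra).
  assert (b^3 * b <= r^3 * b) by (apply Rmult_le_compat_r; lra). lra.
Qed.

Lemma Pw_lip x y r : Rabs x <= r -> Rabs y <= r -> Rabs (Pw x - Pw y) <= 4 * r ^ 3 * Rabs (x - y).
Proof.
  intros Hx Hy. pose proof (Rabs_pos x). assert (0 <= r) by lra.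
  assert (0 <= r ^ 3) by (apply pow_le; lra).
  destruct (Rle_or_lt 0 x) as [X|X]; destruct (Rle_or_lt 0 y) as [Y|Y].
  - rewrite !Pw_pos by lra. rewrite Rabs_right in Hx, Hy by lra. apply quart_diff; lra.
  - rewrite Pw_pos, Pw_neg by lra. rewrite Rabs_right in Hx by lra. rewrite Rabs_left in Hy by lra.
    pose proof (quart_sum x (-y) r ltac:(lra) ltac:(lra)).
    assert (0 <= x^4) by (apply pow_le; lra). assert (0 <= (-y)^4) by (apply pow_le; lra).
    rewrite !Rabs_right by lra. nra.
  - rewrite Pw_neg, Pw_pos by lra. rewrite Rabs_left in Hx by lra. rewrite Rabs_right in Hy by lra.
    pose proof (quart_sum (-x) y r ltac:(lra) ltac:(lra)).
    assert (0 <= y^4) by (apply pow_le; lra). assert (0 <= (-x)^4) by (apply pow_le; lra).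
    rewrite Rabs_left1 by lra. rewrite (Rabs_left (x - y)) by lra. nra.
  - rewrite !Pw_neg by lra. rewrite Rabs_left in Hx, Hy by lra.
    replace (- (- x) ^ 4 - - (- y) ^ 4) with (- ((-x)^4 - (-y)^4)) by ring.
    rewrite Rabs_Ropp. replace (x - y) with (- ((-x) - (-y))) by ring. rewrite Rabs_Ropp.
    apply quart_diff; lra.
Qed.

Lemma glob_lip_abs (f : R -> R) : globally_lipschitz f ->
  exists K, 0 <= K /\ forall x y, Rabs (f x - f y) <= K * Rabs (x - y).
Proof.
  intros [K HK]. exists (Rabs K). split. apply Rabs_pos. intros x y.
  eapply Rle_trans. apply HK. apply Rmult_le_compat_r. apply Rabs_pos. apply Rle_abs.
Qed.

Lemma rhs_locLip ga gs lam eps sB q ba bs : 0 < ga -> 0 < gs ->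
  globally_lipschitz ba -> globally_lipschitz bs ->
  locLip (Fa ga lam eps sB q ba) (Fs gs lam eps sB q bs).
Proof.
  intros Ha Hs Lba Lbs r Hr.
  destruct (glob_lip_abs ba Lba) as [Ka [HKa Ba]].
  destruct (glob_lip_abs bs Lbs) as [Ks [HKs Bs]].
  set (c := Rabs lam + 12 * Rabs (eps * sB) * r ^ 3 + 4 * Rabs sB * r ^ 3 + Rabs q * (Ka + Ks) + 1).
  assert (Hr3 : 0 <= r ^ 3) by (apply pow_le; lra).
  assert (Hc : 0 < c).
  { unfold c. pose proof (Rabs_pos lam). pose proof (Rabs_pos (eps * sB)). pose proof (Rabs_pos sB).
    pose proof (Rabs_pos q). assert (0 <= Rabs q * (Ka + Ks)) by (apply Rmult_le_pos; lra).
    assert (0 <= Rabs (eps * sB) * r^3) by (apply Rmult_le_pos; lra).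
    assert (0 <= Rabs sB * r^3) by (apply Rmult_le_pos; lra). lra. }
  exists (c * (/ ga + / gs)). split.
  { apply Rmult_lt_0_compat. lra. pose proof (Rinv_0_lt_compat _ Ha). pose proof (Rinv_0_lt_compat _ Hs). lra. }
  intros x y x' y' Hx Hy Hx' Hy'.
  set (dx := Rabs (x - x')). set (dy := Rabs (y - y')).
  assert (Hd : 0 <= dx /\ 0 <= dy) by (split; apply Rabs_pos).
  pose proof (Pw_lip x x' r Hx Hx') as PX. pose proof (Pw_lip y y' r Hy Hy') as PY.
  fold dx in PX. fold dy in PY. fold Pw.
  assert (Hlam : Rabs (lam * ((x - x') - (y - y'))) <= Rabs lam * (dx + dy)).
  { rewrite Rabs_mult. apply Rmult_le_compat_l. apply Rabs_pos.
    pose proof (Rabs_triang (x - x') (-(y - y'))) as T1. rewrite Rabs_Ropp in T1.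
    replace ((x - x') + - (y - y')) with ((x-x') - (y-y')) in T1 by ring. fold dx dy in T1. lra. }
  assert (Hlam' : Rabs (lam * ((y - y') - (x - x'))) <= Rabs lam * (dx + dy)).
  { rewrite Rabs_mult. apply Rmult_le_compat_l. apply Rabs_pos.
    pose proof (Rabs_triang (y - y') (-(x - x'))) as T1. rewrite Rabs_Ropp in T1.
    replace ((y - y') + - (x - x')) with ((y-y') - (x-x')) in T1 by ring. fold dx dy in T1. lra. }
  assert (HPY : Rabs (eps * sB * (Pw y - Pw y')) <= Rabs (eps * sB) * (4 * r^3) * (dx + dy)).
  { rewrite Rabs_mult, Rmult_assoc. apply Rmult_le_compat_l. apply Rabs_pos. nra. }
  assert (HPX : Rabs (eps * sB * (Pw x - Pw x')) <= Rabs (eps * sB) * (4 * r^3) * (dx + dy)).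
  { rewrite Rabs_mult, Rmult_assoc. apply Rmult_le_compat_l. apply Rabs_pos. nra. }
  assert (HPY' : Rabs (sB * (Pw y - Pw y')) <= Rabs sB * (4 * r^3) * (dx + dy)).
  { rewrite Rabs_mult, Rmult_assoc. apply Rmult_le_compat_l. apply Rabs_pos. nra. }
  assert (Hba : Rabs (q * (ba x - ba x')) <= Rabs q * Ka * (dx + dy)).
  { rewrite Rabs_mult, Rmult_assoc. apply Rmult_le_compat_l. apply Rabs_pos.
    eapply Rle_trans. apply Ba. fold dx. nra. }
  assert (Hbs : Rabs (q * (bs y - bs y')) <= Rabs q * Ks * (dx + dy)).
  { rewrite Rabs_mult, Rmult_assoc. apply Rmult_le_compat_l. apply Rabs_pos.
    eapply Rle_trans. apply Bs. fold dy. nra. }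
  assert (Hsum : forall a1 a2 a3 a4, Rabs (a1 + a2 + a3 + a4) <= Rabs a1 + Rabs a2 + Rabs a3 + Rabs a4).
  { intros. eapply Rle_trans. apply Rabs_triang. eapply Rle_trans. apply Rplus_le_compat_r. apply Rabs_triang.
    eapply Rle_trans. apply Rplus_le_compat_r. apply Rplus_le_compat_r. apply Rabs_triang. lra. }
  assert (Hq : 0 <= Rabs q * Ka * (dx + dy) /\ 0 <= Rabs q * Ks * (dx + dy)).
  { pose proof (Rabs_pos q). split; apply Rmult_le_pos; try apply Rmult_le_pos; lra. }
  assert (Hcd : 0 <= c * (dx + dy)) by (apply Rmult_le_pos; lra).
  assert (Hia : 0 < / ga) by (apply Rinv_0_lt_compat; lra).
  assert (His : 0 < / gs) by (apply Rinv_0_lt_compat; lra).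
  split.
  - unfold Fa, rhs_a. fold (Pw y) (Pw x) (Pw y') (Pw x').
    replace ((- lam * (x - y) + eps * sB * Pw y - 2 * eps * sB * Pw x + q * ba x) / ga -
             (- lam * (x' - y') + eps * sB * Pw y' - 2 * eps * sB * Pw x' + q * ba x') / ga)
      with ((- (lam * ((x - x') - (y - y'))) + eps * sB * (Pw y - Pw y') + (-2) * (eps * sB * (Pw x - Pw x'))
             + q * (ba x - ba x')) * / ga) by (field; lra).
    rewrite Rabs_mult, (Rabs_right (/ ga)) by lra.
    apply Rle_trans with (c * (dx + dy) * / ga).
    + apply Rmult_le_compat_r. lra. eapply Rle_trans. apply Hsum.
      rewrite Rabs_Ropp, (Rabs_mult (-2)). replace (Rabs (-2)) with 2 by (rewrite Rabs_left; lra).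
      unfold c. assert (0 <= Rabs sB * r^3 * (dx + dy)) by (apply Rmult_le_pos; [apply Rmult_le_pos; [apply Rabs_pos|lra]|lra]). lra.
    + replace (c * (/ ga + / gs) * (dx + dy)) with (c * (dx + dy) * / ga + c * (dx + dy) * / gs) by ring.
      assert (0 <= c * (dx + dy) * / gs) by (apply Rmult_le_pos; lra). lra.
  - unfold Fs, rhs_s. fold (Pw y) (Pw x) (Pw y') (Pw x').
    replace ((- lam * (y - x) - sB * Pw y + eps * sB * Pw x + q * bs y) / gs -
             (- lam * (y' - x') - sB * Pw y' + eps * sB * Pw x' + q * bs y') / gs)
      with ((- (lam * ((y - y') - (x - x'))) + - (sB * (Pw y - Pw y')) + eps * sB * (Pw x - Pw x')
             + q * (bs y - bs y')) * / gs) by (field; lra).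
    rewrite Rabs_mult, (Rabs_right (/ gs)) by lra.
    apply Rle_trans with (c * (dx + dy) * / gs).
    + apply Rmult_le_compat_r. lra. eapply Rle_trans. apply Hsum.
      rewrite !Rabs_Ropp. unfold c. assert (0 <= Rabs (eps * sB) * r^3 * (dx + dy)) by (apply Rmult_le_pos; [apply Rmult_le_pos; [apply Rabs_pos|lra]|lra]). lra.
    + replace (c * (/ ga + / gs) * (dx + dy)) with (c * (dx + dy) * / ga + c * (dx + dy) * / gs) by ring.
      assert (0 <= c * (dx + dy) * / ga) by (apply Rmult_le_pos; lra). lra.
Qed.

Lemma rc_lin (u w : R -> R) a b k1 k2 k3 :
  filterlim u (at_right 0) (locally a) -> filterlim w (at_right 0) (locally b) ->
  filterlim (fun s => k1 * u s + k2 * w s + k3) (at_right 0) (locally (k1 * a + k2 * b + k3)).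
Proof.
  intros Hu Hw. apply filterlim_locally. intros eps. apply at_right_of_delta.
  assert (He : 0 < eps) by apply cond_pos.
  set (K := Rabs k1 + Rabs k2 + 1).
  assert (HK : 0 < K) by (unfold K; pose proof (Rabs_pos k1); pose proof (Rabs_pos k2); lra).
  set (e' := eps / K). assert (He' : 0 < e') by (unfold e'; apply Rdiv_lt_0_compat; lra).
  destruct (right_cont_eps u a Hu e' He') as [d1 [Hd1 R1]].
  destruct (right_cont_eps w b Hw e' He') as [d2 [Hd2 R2]].
  exists (Rmin d1 d2). split. apply Rmin_case; lra.
  intros s Hs. pose proof (Rmin_l d1 d2). pose proof (Rmin_r d1 d2).
  specialize (R1 s ltac:(lra)). specialize (R2 s ltac:(lra)).
  change (Rabs (k1 * u s + k2 * w s + k3 - (k1 * a + k2 * b + k3)) < eps).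
  replace (k1 * u s + k2 * w s + k3 - (k1 * a + k2 * b + k3)) with (k1 * (u s - a) + k2 * (w s - b)) by ring.
  eapply Rle_lt_trans. apply Rabs_triang. rewrite !Rabs_mult.
  assert (Rabs k1 * Rabs (u s - a) <= Rabs k1 * e') by (apply Rmult_le_compat_l; [apply Rabs_pos|lra]).
  assert (Rabs k2 * Rabs (w s - b) <= Rabs k2 * e') by (apply Rmult_le_compat_l; [apply Rabs_pos|lra]).
  assert (K * e' = eps) by (unfold e'; field; lra).
  assert ((Rabs k1 + Rabs k2) * e' < K * e') by (apply Rmult_lt_compat_r; unfold K; lra).
  lra.
Qed.

Lemma D_lin (u w : R -> R) t du dw k1 k2 k3 : is_derive u t du -> is_derive w t dw ->
  is_derive (fun s => k1 * u s + k2 * w s + k3) t (k1 * du + k2 * dw).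
Proof.
  intros H1 H2. apply is_derive_Reals. apply is_derive_Reals in H1, H2.
  replace (k1 * du + k2 * dw) with (k1 * du + k2 * dw + 0) by ring.
  apply (derivable_pt_lim_plus (fun s => k1 * u s + k2 * w s) (fun _ => k3)).
  apply (derivable_pt_lim_plus (fun s => k1 * u s) (fun s => k2 * w s)).
  apply derivable_pt_lim_scal. auto. apply derivable_pt_lim_scal. auto.
  apply derivable_pt_lim_const.
Qed.

Lemma coal_ge Tm Tp bm bp x : Tm < Tp -> bm < bp -> bm <= coalbedo Tm Tp bm bp x.
Proof.
  intros H1 H2. unfold coalbedo. destruct Rle_dec. lra. destruct Rle_dec. lra.
  assert (0 <= (bp - bm) * (x - Tm) / (Tp - Tm)).
  { apply Rmult_le_pos. apply Rmult_le_pos; lra. apply Rlt_le, Rinv_0_lt_compat. lra. }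
  lra.
Qed.

Lemma coal_lip Tm Tp bm bp : Tm < Tp -> bm < bp -> globally_lipschitz (coalbedo Tm Tp bm bp).
Proof.
  intros H1 H2. set (k := (bp - bm) / (Tp - Tm)).
  assert (Hk : 0 < k) by (unfold k; apply Rdiv_lt_0_compat; lra).
  assert (E : forall x, (bp - bm) * (x - Tm) / (Tp - Tm) = k * (x - Tm)) by (intros; unfold k; field; lra).
  assert (E2 : bp = bm + k * (Tp - Tm)) by (unfold k; field; lra).
  exists k. intros x y. unfold coalbedo. rewrite !E.
  repeat destruct Rle_dec; unfold Rabs; repeat destruct Rcase_abs; nra.
Qed.

Lemma Pw_ge v e : 0 < e -> -e <= v -> - (e ^ 4) <= Pw v.
Proof.
  intros He Hv. destruct (Rle_or_lt 0 v).
  - rewrite Pw_pos by lra. assert (0 <= v^4) by (apply pow_le; lra). assert (0 <= e^4) by (apply pow_le; lra). lra.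
  - rewrite Pw_neg by lra. assert ((-v)^4 <= e^4) by (apply pow_incr; lra). lra.
Qed.

Lemma Pw_0 : Pw 0 = 0.
Proof. unfold Pw. ring. Qed.

Lemma pos_of_eps v e0 : 0 < e0 -> (forall e, 0 < e < e0 -> 0 < v + e) -> 0 <= v.
Proof.
  intros He H. apply Rnot_lt_le. intros Hv.
  specialize (H (Rmin e0 (- v) / 2)). 
  assert (0 < Rmin e0 (-v)) by (apply Rmin_case; lra).
  pose proof (Rmin_l e0 (-v)). pose proof (Rmin_r e0 (-v)). 
  assert (0 < v + Rmin e0 (- v) / 2) by (apply H; lra). lra.
Qed.

Lemma Fa_eq ga lam eps sB q ba x y :
  Fa ga lam eps sB q ba x y = (- lam * (x - y) + eps * sB * (Pw y - 2 * Pw x) + q * ba x) / ga.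
Proof. unfold Fa, rhs_a, Pw, Rdiv. ring. Qed.

Lemma Fs_eq gs lam eps sB q bs x y :
  Fs gs lam eps sB q bs x y = (- lam * (y - x) - sB * Pw y + eps * sB * Pw x + q * bs y) / gs.
Proof. unfold Fs, rhs_s, Pw, Rdiv. ring. Qed.

Lemma sq3 a b c : (a + b + c) ^ 2 <= 3 * (a ^ 2 + b ^ 2 + c ^ 2).
Proof. assert (0 <= (a-b)^2 + (b-c)^2 + (a-c)^2) by (repeat apply Rplus_le_le_0_compat; apply pow2_ge_0). lra. Qed.

Lemma pow4_bound x y : 0 <= x -> 0 <= y -> (1 + x + y) ^ 4 <= 27 * (1 + x ^ 4 + y ^ 4).
Proof.
  intros Hx Hy. pose proof (sq3 1 x y) as H1. pose proof (sq3 1 (x^2) (y^2)) as H2.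
  assert (H0 : 0 <= (1 + x + y) ^ 2) by (apply pow_le; lra).
  replace ((1 + x + y) ^ 4) with (((1 + x + y) ^ 2) ^ 2) by ring.
  apply Rle_trans with ((3 * (1 ^ 2 + x ^ 2 + y ^ 2)) ^ 2).
  apply pow_incr. lra.
  replace ((3 * (1 ^ 2 + x ^ 2 + y ^ 2)) ^ 2) with (9 * (1 + x^2 + y^2) ^ 2) by ring.
  replace (1 + x^4 + y^4) with (1^2 + (x^2)^2 + (y^2)^2) by ring. lra.
Qed.

Lemma pow4_sum x y : 0 <= x -> 0 <= y -> (x + y) ^ 4 <= 8 * (x ^ 4 + y ^ 4).
Proof.
  intros Hx Hy. assert (H1 : (x + y)^2 <= 2 * (x^2 + y^2)) by (pose proof (pow2_ge_0 (x - y)); lra).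
  assert (H2 : (x^2 + y^2)^2 <= 2 * ((x^2)^2 + (y^2)^2)) by (pose proof (pow2_ge_0 (x^2 - y^2)); lra).
  assert (H0 : 0 <= (x + y) ^ 2) by (apply pow_le; lra).
  replace ((x + y) ^ 4) with (((x + y) ^ 2) ^ 2) by ring.
  apply Rle_trans with ((2 * (x ^ 2 + y ^ 2)) ^ 2). apply pow_incr. lra.
  replace (x^4 + y^4) with ((x^2)^2 + (y^2)^2) by ring. lra.
Qed.

Lemma Hm_from_V F1 F2 x0 y0 T u w a : 0 < a -> sol F1 F2 x0 y0 T u w ->
  (forall t, 0 < t < T -> 0 <= u t /\ 0 <= w t /\ 0 < a * F1 (u t) (w t) + 1 * F2 (u t) (w t)) ->
  forall t1 t2, 0 < t1 -> t1 <= t2 -> t2 < T ->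
    Rabs (u t1) + Rabs (w t1) <= (Rmax a 1 / Rmin a 1) * (Rabs (u t2) + Rabs (w t2)).
Proof.
  intros Ha (_ & _ & _ & _ & HD) HP t1 t2 H1 H2 H3.
  destruct (mvt (fun s => a * u s + 1 * w s + 0) (fun s => a * F1 (u s) (w s) + 1 * F2 (u s) (w s)) t1 t2 H2)
    as [c [Hc Hm]].
  { intros s Hs. destruct (HD s ltac:(lra)). apply D_lin; auto. }
  destruct (HP c ltac:(lra)) as (_ & _ & Hdc).
  destruct (HP t1 ltac:(lra)) as (X1 & Y1 & _). destruct (HP t2 ltac:(lra)) as (X2 & Y2 & _).
  rewrite !Rabs_right by lra.
  assert (Hmon : a * u t1 + w t1 <= a * u t2 + w t2) by nra.
  set (m := Rmax a 1). set (mn := Rmin a 1).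
  assert (Hmn : 0 < mn) by (unfold mn; apply Rmin_case; lra).
  assert (mn <= a /\ mn <= 1) by (unfold mn; split; [apply Rmin_l | apply Rmin_r]).
  assert (a <= m /\ 1 <= m) by (unfold m; split; [apply Rmax_l | apply Rmax_r]).
  assert (mn * (u t1 + w t1) <= a * u t1 + w t1) by nra.
  assert (a * u t2 + w t2 <= m * (u t2 + w t2)) by nra.
  apply Rmult_le_reg_l with mn. lra.
  replace (mn * (m / mn * (u t2 + w t2))) with (m * (u t2 + w t2)) by (field; lra). lra.
Qed.

Lemma e4_le_e e : 0 < e -> e <= 1 -> e ^ 4 <= e.
Proof. intros. assert (e^3 <= 1) by (replace 1 with (1^3) by ring; apply pow_incr; lra).
  replace (e^4) with (e * e^3) by ring. nra. Qed.

Lemma partA_pos ga gs q sB eps Tm Tp bm bp x0 y0 T u w :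
  0 < ga -> 0 < gs -> 0 < q -> 0 < sB -> Tm < Tp -> 0 < bm -> bm < bp -> 2 < eps ->
  0 <= x0 -> 0 <= y0 ->
  sol (Fa ga 0 eps sB q (fun _ => 0)) (Fs gs 0 eps sB q (coalbedo Tm Tp bm bp)) x0 y0 T u w ->
  forall t, 0 <= t < T -> 0 <= u t /\ 0 <= w t.
Proof.
  intros Hga Hgs Hq HsB HT Hbm Hb Heps Hx0 Hy0 HS t Ht.
  set (e0 := Rmin 1 (q * bm / (eps * sB))).
  assert (He0 : 0 < e0 /\ e0 <= 1 /\ eps * sB * e0 <= q * bm).
  { unfold e0. assert (0 < q * bm / (eps * sB)) by (apply Rdiv_lt_0_compat; nra).
    split. apply Rmin_case; lra. split. apply Rmin_l.
    apply Rle_trans with (eps * sB * (q * bm / (eps * sB))).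
    apply Rmult_le_compat_l. nra. apply Rmin_r. right. field. nra. }
  destruct HS as (U0 & W0 & UC & WC & HD).
  assert (Key : forall e, 0 < e < e0 -> 0 < u t + e /\ 0 < w t + e).
  { intros e He.
    assert (He4 : e ^ 4 <= e) by (apply e4_le_e; lra).
    assert (He4p : 0 < e ^ 4) by (apply pow_lt; lra).
    assert (Hsm : eps * sB * e ^ 4 < q * bm).
    { apply Rle_lt_trans with (eps * sB * e). apply Rmult_le_compat_l; nra.
      apply Rlt_le_trans with (eps * sB * e0). apply Rmult_lt_compat_l; nra. lra. }
    set (F1 := Fa ga 0 eps sB q (fun _ => 0)) in *.
    set (F2 := Fs gs 0 eps sB q (coalbedo Tm Tp bm bp)) in *.
    assert (Hh := hitting T (fun s => 1 * u s + 0 * w s + e) (fun s => 0 * u s + 1 * w s + e)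
      (fun s => 0 * u s + 0 * w s + 1)
      (fun s => 1 * F1 (u s) (w s) + 0 * F2 (u s) (w s))
      (fun s => 0 * F1 (u s) (w s) + 1 * F2 (u s) (w s))
      (fun s => 0 * F1 (u s) (w s) + 0 * F2 (u s) (w s))).
    simpl in Hh. rewrite U0, W0 in Hh.
    destruct (Hh ltac:(lra) ltac:(lra) ltac:(lra)) with (t := t) as (G1 & G2 & _); auto; try lra.
    - apply rc_lin; auto.
    - apply rc_lin; auto.
    - apply rc_lin; auto.
    - intros s Hs. destruct (HD s Hs) as [D1 D2]. split; [|split]; apply D_lin; auto.
    - intros s Hs G1 G2 G3. split; [|split]; intros Z.
      + assert (Eu : u s = - e) by lra. rewrite Eu.
        unfold F1. rewrite Fa_eq. rewrite (Pw_neg (-e)) by lra.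
        replace (- - e) with e by ring.
        assert (Pw (w s) >= - (e ^ 4)) by (apply Rle_ge, Pw_ge; lra).
        assert (0 < (- 0 * (- e - w s) + eps * sB * (Pw (w s) - 2 * - e ^ 4) + q * 0))
          by (assert (0 < eps * sB) by nra; nra).
        assert (0 < (- 0 * (- e - w s) + eps * sB * (Pw (w s) - 2 * - e ^ 4) + q * 0) / ga)
          by (apply Rdiv_lt_0_compat; lra). lra.
      + assert (Ew : w s = - e) by lra. rewrite Ew.
        unfold F2. rewrite Fs_eq. rewrite (Pw_neg (-e)) by lra.
        replace (- - e) with e by ring.
        assert (Pw (u s) >= - (e ^ 4)) by (apply Rle_ge, Pw_ge; lra).
        pose proof (coal_ge Tm Tp bm bp (- e) HT Hb).
        assert (eps * sB * Pw (u s) >= eps * sB * - (e^4)) by (apply Rle_ge, Rmult_le_compat_l; nra).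
        assert (q * bm <= q * coalbedo Tm Tp bm bp (- e)) by (apply Rmult_le_compat_l; lra).
        assert (0 < - 0 * (- e - u s) - sB * - e ^ 4 + eps * sB * Pw (u s) + q * coalbedo Tm Tp bm bp (- e))
          by nra.
        assert (0 < (- 0 * (- e - u s) - sB * - e ^ 4 + eps * sB * Pw (u s) + q * coalbedo Tm Tp bm bp (- e)) / gs)
          by (apply Rdiv_lt_0_compat; lra). lra.
      + lra. }
  split; apply (pos_of_eps _ e0); try lra; intros e He; apply Key in He; lra.
Qed.

Definition kk gs eps := (2 + eps) / (4 * gs).
Definition aV ga gs eps := kk gs eps * ga / eps.
Definition alV gs sB eps := sB * (eps - 2) / (4 * gs).

Lemma V_ident ga gs lam eps sB q ba bs x y : 0 < ga -> 0 < gs -> 2 < eps ->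
  aV ga gs eps * Fa ga lam eps sB q ba x y + 1 * Fs gs lam eps sB q bs x y =
  (kk gs eps / eps) * (- lam * (x - y) + q * ba x) + (- lam * (y - x) + q * bs y) / gs
  + alV gs sB eps * Pw y + 2 * alV gs sB eps * Pw x.
Proof. intros. rewrite Fa_eq, Fs_eq. unfold aV, kk, alV. field. lra. Qed.

Lemma pw4 x : 0 <= x -> Pw x = x ^ 4.
Proof. apply Pw_pos. Qed.

Lemma partA_bound ga gs q sB eps Tm Tp bm bp x0 y0 :
  0 < ga -> 0 < gs -> 0 < q -> 0 < sB -> Tm < Tp -> 0 < bm -> bm < bp -> 2 < eps ->
  0 <= x0 -> 0 <= y0 ->
  exists Tb C,
   (forall T u w, 0 < T -> sol (Fa ga 0 eps sB q (fun _ => 0)) (Fs gs 0 eps sB q (coalbedo Tm Tp bm bp)) x0 y0 T u w -> T <= Tb) /\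
   (forall T u w, sol (Fa ga 0 eps sB q (fun _ => 0)) (Fs gs 0 eps sB q (coalbedo Tm Tp bm bp)) x0 y0 T u w ->
     forall t1 t2, 0 < t1 -> t1 <= t2 -> t2 < T ->
     Rabs (u t1) + Rabs (w t1) <= C * (Rabs (u t2) + Rabs (w t2))).
Proof.
  intros Hga Hgs Hq HsB HT Hbm Hb Heps Hx0 Hy0.
  set (F1 := Fa ga 0 eps sB q (fun _ => 0)). set (F2 := Fs gs 0 eps sB q (coalbedo Tm Tp bm bp)).
  set (a := aV ga gs eps). set (al := alV gs sB eps). set (be := q * bm / gs).
  assert (Ha : 0 < a) by (unfold a, aV, kk; apply Rmult_lt_0_compat; [apply Rmult_lt_0_compat|apply Rinv_0_lt_compat]; try apply Rdiv_lt_0_compat; lra).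
  assert (Hal : 0 < al) by (unfold al, alV; apply Rdiv_lt_0_compat; nra).
  assert (Hbe : 0 < be) by (unfold be; apply Rdiv_lt_0_compat; nra).
  set (ga' := Rmin al be). assert (Hg : 0 < ga') by (unfold ga'; apply Rmin_case; lra).
  set (m := Rmax a 1). assert (Hm1 : 1 <= m) by apply Rmax_r. assert (Ham : a <= m) by apply Rmax_l.
  set (c := ga' / (27 * m ^ 4)).
  assert (Hm4 : 0 < m ^ 4) by (apply pow_lt; lra).
  assert (Hc : 0 < c) by (unfold c; apply Rdiv_lt_0_compat; lra).
  assert (Key : forall T u w, sol F1 F2 x0 y0 T u w -> forall t, 0 < t < T ->
     0 <= u t /\ 0 <= w t /\ ga' * (1 + u t ^ 4 + w t ^ 4) <= a * F1 (u t) (w t) + 1 * F2 (u t) (w t)).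
  { intros T u w HS t Ht.
    destruct (partA_pos ga gs q sB eps Tm Tp bm bp x0 y0 T u w Hga Hgs Hq HsB HT Hbm Hb Heps Hx0 Hy0 HS t ltac:(lra))
      as [X Y].
    split; auto. split; auto. unfold a, F1, F2. rewrite V_ident by lra. fold al.
    rewrite !pw4 by lra.
    pose proof (coal_ge Tm Tp bm bp (w t) HT Hb).
    assert (q * bm / gs <= q * coalbedo Tm Tp bm bp (w t) / gs).
    { apply Rmult_le_compat_r. left; apply Rinv_0_lt_compat; lra. apply Rmult_le_compat_l; lra. }
    fold be in H0.
    assert (0 <= u t ^ 4) by (apply pow_le; lra). assert (0 <= w t ^ 4) by (apply pow_le; lra).
    assert (ga' <= al /\ ga' <= be) by (unfold ga'; split; [apply Rmin_l|apply Rmin_r]).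
    replace (kk gs eps / eps * (- 0 * (u t - w t) + q * 0)) with 0 by ring.
    replace ((- 0 * (w t - u t) + q * coalbedo Tm Tp bm bp (w t)) / gs) with (q * coalbedo Tm Tp bm bp (w t) / gs)
      by (field; lra).
    nra. }
  exists (1 / (3 * c)), (Rmax a 1 / Rmin a 1). split.
  - intros T u w HTp HS.
    apply (ode_blow (fun s => a * u s + 1 * w s + 1) (fun s => a * F1 (u s) (w s) + 1 * F2 (u s) (w s)) T c Hc).
    intros t Ht. destruct (Key T u w HS t Ht) as (X & Y & D).
    pose proof HS as (_ & _ & _ & _ & HD). destruct (HD t Ht) as [D1 D2].
    split; [|split]. nra. apply D_lin; auto.
    assert (HU : a * u t + 1 * w t + 1 <= m * (1 + u t + w t)) by nra.
    assert (HU4 : (a * u t + 1 * w t + 1) ^ 4 <= (m * (1 + u t + w t)) ^ 4) by (apply pow_incr; nra).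
    pose proof (pow4_bound (u t) (w t) X Y).
    replace ((m * (1 + u t + w t)) ^ 4) with (m ^ 4 * (1 + u t + w t) ^ 4) in HU4 by ring.
    assert (m ^ 4 * (1 + u t + w t) ^ 4 <= m^4 * (27 * (1 + u t ^ 4 + w t ^ 4))) by (apply Rmult_le_compat_l; lra).
    unfold c. apply Rle_trans with (ga' / (27 * m ^ 4) * (m ^ 4 * (27 * (1 + u t ^ 4 + w t ^ 4)))).
    apply Rmult_le_compat_l. apply Rlt_le; exact Hc. lra.
    replace (ga' / (27 * m ^ 4) * (m ^ 4 * (27 * (1 + u t ^ 4 + w t ^ 4)))) with (ga' * (1 + u t ^ 4 + w t ^ 4))
      by (field; lra). exact D.
  - intros T u w HS. apply (Hm_from_V F1 F2 x0 y0 T u w a Ha HS).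
    intros t Ht. destruct (Key T u w HS t Ht) as (X & Y & D). split; auto. split; auto.
    assert (0 <= u t ^ 4) by (apply pow_le; lra). assert (0 <= w t ^ 4) by (apply pow_le; lra). nra.
Qed.

Lemma dV_bound_b ga gs lam q sB eps (ba bs : R -> R) x y :
  0 < ga -> 0 < gs -> 0 < lam -> 0 < q -> 0 < sB -> (forall x, 0 <= ba x) -> (forall x, 0 < bs x) -> 2 < eps ->
  0 <= x -> 0 <= y ->
  let a := aV ga gs eps in let al := alV gs sB eps in
  let K1 := lam * (kk gs eps / eps + 1 / gs) in
  let m := Rmax a 1 in let V1 := m * (1 + 16 * K1 / al) in
  V1 <= a * x + y ->
  al / (16 * m ^ 4) * (a * x + y) ^ 4 <= a * Fa ga lam eps sB q ba x y + 1 * Fs gs lam eps sB q bs x y.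
Proof.
  intros Hga Hgs Hlam Hq HsB Hba Hbs Heps Hx Hy a al K1 m V1 HV.
  assert (Hkk : 0 < kk gs eps) by (unfold kk; apply Rdiv_lt_0_compat; lra).
  assert (Ha : 0 < a) by (unfold a, aV; apply Rdiv_lt_0_compat; [apply Rmult_lt_0_compat|]; lra).
  assert (Hal : 0 < al) by (unfold al, alV; apply Rdiv_lt_0_compat; nra).
  assert (Hke : 0 < kk gs eps / eps) by (apply Rdiv_lt_0_compat; lra).
  assert (HK1 : 0 < K1) by (unfold K1; apply Rmult_lt_0_compat; [lra|]; assert (0 < 1/gs) by (apply Rdiv_lt_0_compat; lra); lra).
  assert (Hm1 : 1 <= m) by apply Rmax_r. assert (Ham : a <= m) by apply Rmax_l.
  unfold a at 2. rewrite V_ident by lra. fold a al. rewrite !pw4 by lra.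
  set (S := x + y).
  assert (HS4 : S ^ 4 <= 8 * (x ^ 4 + y ^ 4)) by (apply pow4_sum; lra).
  assert (HVS : a * x + y <= m * S) by (unfold S; nra).
  assert (HS1 : 1 + 16 * K1 / al <= S).
  { apply Rmult_le_reg_l with m. lra. apply Rle_trans with (a * x + y). exact HV. lra. }
  assert (H16 : 0 < 16 * K1 / al) by (apply Rdiv_lt_0_compat; lra).
  assert (HS3 : S <= S ^ 3) by (assert (1 <= S) by lra; assert (1 <= S^2) by nra; replace (S^3) with (S * S^2) by ring; nra).
  assert (HK1S : K1 * S <= al / 16 * S ^ 4).
  { assert (16 * K1 / al <= S ^ 3) by lra.
    replace (al / 16 * S ^ 4) with (al / 16 * S * S ^ 3) by ring.
    apply Rle_trans with (al / 16 * S * (16 * K1 / al)).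
    right. field. lra. apply Rmult_le_compat_l. apply Rmult_le_pos; lra. lra. }
  assert (Hlin : - K1 * S <= kk gs eps / eps * (- lam * (x - y) + q * ba x) + (- lam * (y - x) + q * bs y) / gs).
  { pose proof (Hba x). pose proof (Hbs y).
    assert (0 <= q * ba x) by (apply Rmult_le_pos; lra).
    assert (0 <= q * bs y) by (apply Rmult_le_pos; lra).
    assert (kk gs eps / eps * (- lam * (x - y) + q * ba x) >= kk gs eps / eps * (- lam * x))
      by (apply Rle_ge, Rmult_le_compat_l; nra).
    assert ((- lam * (y - x) + q * bs y) / gs >= (- lam * y) / gs)
      by (apply Rle_ge; unfold Rdiv; apply Rmult_le_compat_r; [left; apply Rinv_0_lt_compat; lra| nra]).
    unfold K1, S. replace ((- lam * y) / gs) with (- (lam * (1 / gs)) * y) in * by (field; lra).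
    assert (0 < 1 / gs) by (apply Rdiv_lt_0_compat; lra).
    set (k' := kk gs eps / eps) in *. set (g' := 1 / gs) in *.
    assert (0 <= lam * k' * y) by (apply Rmult_le_pos; [apply Rmult_le_pos|]; lra).
    assert (0 <= lam * g' * x) by (apply Rmult_le_pos; [apply Rmult_le_pos|]; lra).
    lra. }
  assert (HV4 : (a * x + y) ^ 4 <= m ^ 4 * S ^ 4).
  { replace (m ^ 4 * S ^ 4) with ((m * S) ^ 4) by ring. apply pow_incr. split; [nra|lra]. }
  assert (Hm4 : 0 < m ^ 4) by (apply pow_lt; lra).
  apply Rle_trans with (al / 16 * S ^ 4).
  { apply Rle_trans with (al / (16 * m ^ 4) * (m ^ 4 * S ^ 4)).
    apply Rmult_le_compat_l. apply Rlt_le, Rdiv_lt_0_compat; lra. exact HV4.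
    right. field. lra. }
  assert (al * (x ^ 4 + y ^ 4) >= al / 8 * S ^ 4) by (apply Rle_ge; nra).
  assert (0 <= x^4) by (apply pow_le; lra). assert (0 <= y^4) by (apply pow_le; lra).
  nra.
Qed.

Lemma partB ga gs lam q sB eps (ba bs : R -> R) :
  0 < ga -> 0 < gs -> 0 < lam -> 0 < q -> 0 < sB -> (forall x, 0 <= ba x) -> (forall x, 0 < bs x) -> 2 < eps ->
  exists x0 y0, 0 <= x0 /\ 0 <= y0 /\ exists Tb C,
   (forall T u w, 0 < T -> sol (Fa ga lam eps sB q ba) (Fs gs lam eps sB q bs) x0 y0 T u w -> T <= Tb) /\
   (forall T u w, sol (Fa ga lam eps sB q ba) (Fs gs lam eps sB q bs) x0 y0 T u w ->
     forall t1 t2, 0 < t1 -> t1 <= t2 -> t2 < T ->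
     Rabs (u t1) + Rabs (w t1) <= C * (Rabs (u t2) + Rabs (w t2))).
Proof.
  intros Hga Hgs Hlam Hq HsB Hba Hbs Heps.
  set (a := aV ga gs eps). set (al := alV gs sB eps).
  set (K1 := lam * (kk gs eps / eps + 1 / gs)). set (m := Rmax a 1). set (V1 := m * (1 + 16 * K1 / al)).
  set (c := al / (16 * m ^ 4)).
  assert (Hkk : 0 < kk gs eps) by (unfold kk; apply Rdiv_lt_0_compat; lra).
  assert (Ha : 0 < a) by (unfold a, aV; apply Rdiv_lt_0_compat; [apply Rmult_lt_0_compat|]; lra).
  assert (Hal : 0 < al) by (unfold al, alV; apply Rdiv_lt_0_compat; nra).
  assert (HK1 : 0 < K1) by (unfold K1; apply Rmult_lt_0_compat; [lra|]; assert (0 < kk gs eps / eps) by (apply Rdiv_lt_0_compat; lra); assert (0 < 1/gs) by (apply Rdiv_lt_0_compat; lra); lra).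
  assert (Hm1 : 1 <= m) by apply Rmax_r.
  assert (HV1 : 0 < V1) by (unfold V1; assert (0 < 16 * K1 / al) by (apply Rdiv_lt_0_compat; lra); nra).
  assert (Hm4 : 0 < m ^ 4) by (apply pow_lt; lra).
  assert (Hc : 0 < c) by (unfold c; apply Rdiv_lt_0_compat; lra).
  set (F1 := Fa ga lam eps sB q ba). set (F2 := Fs gs lam eps sB q bs).
  exists V1, V1. split; [lra|]. split; [lra|].
  assert (Good : forall T u w, sol F1 F2 V1 V1 T u w -> forall t, 0 <= t < T ->
     0 < u t /\ 0 < w t /\ 0 < a * u t + w t - V1).
  { intros T u w HS t Ht. destruct HS as (U0 & W0 & UC & WC & HD).
    assert (Hh := hitting T (fun s => 1 * u s + 0 * w s + 0) (fun s => 0 * u s + 1 * w s + 0)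
      (fun s => a * u s + 1 * w s + - V1)
      (fun s => 1 * F1 (u s) (w s) + 0 * F2 (u s) (w s))
      (fun s => 0 * F1 (u s) (w s) + 1 * F2 (u s) (w s))
      (fun s => a * F1 (u s) (w s) + 1 * F2 (u s) (w s))).
    simpl in Hh. rewrite U0, W0 in Hh.
    destruct (Hh ltac:(lra) ltac:(lra) ltac:(nra)) with (t := t) as (G1 & G2 & G3); auto; try lra.
    - apply rc_lin; auto.
    - apply rc_lin; auto.
    - apply rc_lin; auto.
    - intros s Hs. destruct (HD s Hs) as [D1 D2]. split; [|split]; apply D_lin; auto.
    - intros s Hs G1 G2 G3. split; [|split]; intros Z.
      + assert (Eu : u s = 0) by lra. rewrite Eu. unfold F1. rewrite Fa_eq, Pw_0.
        rewrite Eu in G3. rewrite pw4 by lra.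
        assert (0 < w s) by lra. pose proof (Hba 0).
        assert (0 <= w s ^ 4) by (apply pow_le; lra).
        assert (0 < - lam * (0 - w s) + eps * sB * (w s ^ 4 - 2 * 0) + q * ba 0).
        { assert (0 <= eps * sB * w s ^ 4) by (apply Rmult_le_pos; nra). 
          assert (0 <= q * ba 0) by (apply Rmult_le_pos; lra). nra. }
        assert (0 < (- lam * (0 - w s) + eps * sB * (w s ^ 4 - 2 * 0) + q * ba 0) / ga)
          by (apply Rdiv_lt_0_compat; lra). lra.
      + assert (Ew : w s = 0) by lra. rewrite Ew. unfold F2. rewrite Fs_eq, Pw_0.
        rewrite pw4 by lra. pose proof (Hbs 0).
        assert (0 <= u s ^ 4) by (apply pow_le; lra).
        assert (0 < - lam * (0 - u s) - sB * 0 + eps * sB * u s ^ 4 + q * bs 0).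
        { assert (0 <= eps * sB * u s ^ 4) by (apply Rmult_le_pos; nra).
          assert (0 < q * bs 0) by (apply Rmult_lt_0_compat; lra). nra. }
        assert (0 < (- lam * (0 - u s) - sB * 0 + eps * sB * u s ^ 4 + q * bs 0) / gs)
          by (apply Rdiv_lt_0_compat; lra). lra.
      + assert (HVs : a * u s + w s = V1) by lra.
        pose proof (dV_bound_b ga gs lam q sB eps ba bs (u s) (w s) Hga Hgs Hlam Hq HsB Hba Hbs Heps
                      ltac:(lra) ltac:(lra) ltac:(fold a al K1 m V1; lra)) as HB.
        fold a al K1 m V1 c F1 F2 in HB. rewrite HVs in HB.
        assert (0 < c * V1 ^ 4) by (apply Rmult_lt_0_compat; [lra|apply pow_lt; lra]). lra. }
  assert (DB : forall T u w, sol F1 F2 V1 V1 T u w -> forall t, 0 < t < T ->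
     0 < u t /\ 0 < w t /\ V1 < a * u t + w t /\ c * (a * u t + w t) ^ 4 <= a * F1 (u t) (w t) + 1 * F2 (u t) (w t)).
  { intros T u w HS t Ht. destruct (Good T u w HS t ltac:(lra)) as (X & Y & V).
    split; auto. split; auto. split. lra.
    pose proof (dV_bound_b ga gs lam q sB eps ba bs (u t) (w t) Hga Hgs Hlam Hq HsB Hba Hbs Heps
                      ltac:(lra) ltac:(lra) ltac:(fold a al K1 m V1; lra)) as HB.
    exact HB. }
  exists (1 / (3 * (c * V1 ^ 3))), (Rmax a 1 / Rmin a 1). split.
  - intros T u w HTp HS.
    apply (ode_blow (fun s => (a / V1) * u s + (1 / V1) * w s + 0)
                    (fun s => (a / V1) * F1 (u s) (w s) + (1 / V1) * F2 (u s) (w s)) T (c * V1 ^ 3)).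
    apply Rmult_lt_0_compat; [lra|apply pow_lt; lra].
    intros t Ht. destruct (DB T u w HS t Ht) as (X & Y & V & D).
    pose proof HS as (_ & _ & _ & _ & HD). destruct (HD t Ht) as [D1 D2].
    assert (E1 : a / V1 * u t + 1 / V1 * w t + 0 = (a * u t + w t) / V1) by (field; lra).
    assert (E2 : a / V1 * F1 (u t) (w t) + 1 / V1 * F2 (u t) (w t) = (a * F1 (u t) (w t) + 1 * F2 (u t) (w t)) / V1)
      by (field; lra).
    split; [|split]. rewrite E1. apply Rmult_le_reg_r with V1. lra. unfold Rdiv. rewrite Rmult_assoc, Rinv_l; lra.
    apply D_lin; auto.
    rewrite E1, E2. set (Vt := a * u t + w t) in *.
    replace (c * V1 ^ 3 * (Vt / V1) ^ 4) with ((c * Vt ^ 4) / V1) by (field; lra).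
    unfold Rdiv. apply Rmult_le_compat_r. left; apply Rinv_0_lt_compat; lra. exact D.
  - intros T u w HS. apply (Hm_from_V F1 F2 V1 V1 T u w a Ha HS).
    intros t Ht. destruct (DB T u w HS t Ht) as (X & Y & V & D). split. lra. split. lra.
    assert (0 < c * (a * u t + w t) ^ 4) by (apply Rmult_lt_0_compat; [lra|apply pow_lt; lra]). lra.
Qed.

Lemma bridge ga gs lam eps sB q ba bs x0 y0 : 0 < ga -> 0 < gs ->
  globally_lipschitz ba -> globally_lipschitz bs ->
  (exists Tb C,
   (forall T u w, 0 < T -> sol (Fa ga lam eps sB q ba) (Fs gs lam eps sB q bs) x0 y0 T u w -> T <= Tb) /\
   (forall T u w, sol (Fa ga lam eps sB q ba) (Fs gs lam eps sB q bs) x0 y0 T u w ->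
     forall t1 t2, 0 < t1 -> t1 <= t2 -> t2 < T ->
     Rabs (u t1) + Rabs (w t1) <= C * (Rabs (u t2) + Rabs (w t2)))) ->
  unique_maximal_solution_blows_up ga gs lam eps sB q ba bs x0 y0.
Proof.
  intros Hga Hgs La Ls [Tb [C [Hb Hm]]].
  destruct (maximal _ _ x0 y0 Tb C (rhs_locLip ga gs lam eps sB q ba bs Hga Hgs La Ls) Hb Hm)
    as (Tmax & u & w & H1 & H2 & H3 & H4).
  exists Tmax, u, w. split; [exact H1|]. split.
  - apply sol_iff; auto.
  - split; [|exact H4]. intros T Ua Us HT HS. apply H3; auto. apply sol_iff; auto.
Qed.

Theorem proposition2p7 (ga gs : R) (hga : 0 < ga) (hgs : 0 < gs) :
  (* (a) *)
  (forall (q sB eps Tm Tp bm bp Ta0 Ts0 : R),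
     0 < q -> 0 < sB -> 0 < Tm -> Tm < Tp -> 0 < bm -> bm < bp ->
     2 < eps -> 0 <= Ta0 -> 0 <= Ts0 ->
     unique_maximal_solution_blows_up ga gs 0 eps sB q
       (fun _ => 0) (coalbedo Tm Tp bm bp) Ta0 Ts0) /\
  (* (b) *)
  (forall (lam q sB eps : R) (ba bs : R -> R),
     0 < lam -> 0 < q -> 0 < sB ->
     (forall x, 0 <= ba x) -> (forall x, 0 < bs x) ->
     globally_lipschitz ba -> globally_lipschitz bs ->
     2 < eps ->
     exists Ta0 Ts0, 0 <= Ta0 /\ 0 <= Ts0 /\
       unique_maximal_solution_blows_up ga gs lam eps sB q ba bs Ta0 Ts0).
Proof.
  split.
  - intros q sB eps Tm Tp bm bp Ta0 Ts0 Hq HsB HTm HT Hbm Hb Heps H0 H1.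
    apply bridge; auto.
    + exists 0. intros x y. rewrite Rminus_eq_0, Rabs_R0. pose proof (Rabs_pos (x - y)). lra.
    + apply coal_lip; auto.
    + apply partA_bound; auto.
  - intros lam q sB eps ba bs Hlam Hq HsB Hba Hbs La Ls Heps.
    destruct (partB ga gs lam q sB eps ba bs hga hgs Hlam Hq HsB Hba Hbs Heps) as (x0 & y0 & Hx & Hy & HH).
    exists x0, y0. split; auto. split; auto. apply bridge; auto.
Qed.
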